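(* Assume $\delta>d$, $\alpha=\gamma/(\delta-d)$, and that $f$ is not a polynomial product. Then for every $\epsilon>0$ there is $R>0$ such that $$\big|G_z^\alpha(w)-G_h(z^{-\alpha}w)\big|<\epsilon\quad\text{for all } (z,w) \text{ with } |z|>R,$$ i.e. $G_z^\alpha(w)=G_h(z^{-\alpha}w)+o(1)$ as $z\to\infty$, uniformly in $w$.
   Context: Let $p(z)=z^\delta+O(z^{\delta-1})$ be a monic polynomial of degree $\delta\ge 2$, and let $q(z,w)=b(z)w^d+(\text{terms of lower degree in } w)$ be a polynomial with $d=\deg_w q\ge 2$, where $b$ is a monic polynomial of degree $\gamma\ge 0$. Let $f(z,w)=(p(z),q(z,w))$; $f$ is a polynomial product if $q$ does not depend on $z$. Write $Q_z^n=q_{p^{n-1}(z)}\circ\cdots\circ q_{p(z)}\circ q_z$ with $q_z=q(z,\cdot)$. For $\delta>d$, $\alpha=\max\{n_j/(\delta-m_j)\}$ over monomials $z^{n_j}w^{m_j}$ appearing in $q$ with nonzero coefficient. $G_z^\alpha(w)=\lim_{n\to\infty}d^{-n}\log^+\big(|Q_z^n(w)|/|p^n(z)|^\alpha\big)$ (defined for $z$ with $p^n(z)\to\infty$). Give the monomial $z^nw^m$ weight $n+\alpha m$; let $h(z,w)$ be the sum of those terms of $q$ of weight exactly $\alpha\delta$ (the maximal weight; it contains $z^\gamma w^d$), and let $h(c)=h(1,c)$, a one-variable polynomial of degree $d$. $G_h(c)=\lim_{n\to\infty}d^{-n}\log^+|h^n(c)|$ is its Green function. The value $G_h(z^{-\alpha}w)$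 does not depend on the choice of branch of $z^{-\alpha}$. *)

(* Defs.v *)
From Stdlib Require Import Reals Lra ClassicalEpsilon.
Open Scope R_scope.

Definition Cx : Type := (R * R)%type.
Definition Cx0 : Cx := (0, 0).
Definition Cx1 : Cx := (1, 0).
Definition Cadd (a b : Cx) : Cx := (fst a + fst b, snd a + snd b).
Definition Cmul (a b : Cx) : Cx :=
  (fst a * fst b - snd a * snd b, fst a * snd b + snd a * fst b).
Fixpoint Cpow (a : Cx) (n : nat) : Cx :=
  match n with O => Cx1 | S k => Cmul a (Cpow a k) end.
Definition Cnorm (a : Cx) : R := sqrt (fst a * fst a + snd a * snd a).

Fixpoint csum (f : nat -> Cx) (n : nat) : Cx :=
  match n with O => f O | S k => Cadd (csum f k) (f (S k)) end.

Definition poly1_eval (deg : nat) (pc : nat -> Cx) (z : Cx) : Cx :=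
  csum (fun k => Cmul (pc k) (Cpow z k)) deg.

Definition poly2_eval (N d : nat) (qc : nat -> nat -> Cx) (z w : Cx) : Cx :=
  csum (fun n => csum (fun m => Cmul (qc n m) (Cmul (Cpow z n) (Cpow w m))) d) N.

Definition lim_seq (u : nat -> R) : R :=
  epsilon (inhabits 0) (fun L => Un_cv u L).

Definition logplus (x : R) : R := Rmax 0 (ln x).

Fixpoint skew_iter (delta N d : nat) (pc : nat -> Cx) (qc : nat -> nat -> Cx)
  (n : nat) (z w : Cx) : Cx * Cx :=
  match n with
  | O => (z, w)
  | S k => let zw := skew_iter delta N d pc qc k z w in
           (poly1_eval delta pc (fst zw), poly2_eval N d qc (fst zw) (snd zw))
  end.

Definition G_alpha (delta N d : nat) (pc : nat -> Cx) (qc : nat -> nat -> Cx)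
  (alpha : R) (z w : Cx) : R :=
  lim_seq (fun n =>
    let zw := skew_iter delta N d pc qc n z w in
    / (INR d ^ n) * logplus (Cnorm (snd zw) / Rpower (Cnorm (fst zw)) alpha)).

(* h: sum of the terms of q of weight n + alpha m exactly alpha*delta, at z = 1:
   h(c) = sum_m hcoef m c^m *)
Definition h_coef (delta N : nat) (qc : nat -> nat -> Cx) (alpha : R) (m : nat) : Cx :=
  csum (fun n => if Req_EM_T (INR n + alpha * INR m) (alpha * INR delta)
                 then qc n m else Cx0) N.

Definition h_eval (delta N d : nat) (qc : nat -> nat -> Cx) (alpha : R) (c : Cx) : Cx :=
  poly1_eval d (h_coef delta N qc alpha) c.

Definition G_h (delta N d : nat) (qc : nat -> nat -> Cx) (alpha : R) (c : Cx) : R :=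
  lim_seq (fun n =>
    / (INR d ^ n) * logplus (Cnorm (Nat.iter n (h_eval delta N d qc alpha) c))).

(* the branch of z^{-alpha} attached to an argument theta of z *)
Definition zpow_branch (alpha : R) (z : Cx) (theta : R) : Cx :=
  (Rpower (Cnorm z) (- alpha) * cos (- alpha * theta),
   Rpower (Cnorm z) (- alpha) * sin (- alpha * theta)).

Definition is_arg (z : Cx) (theta : R) : Prop :=
  z = (Cnorm z * cos theta, Cnorm z * sin theta).

(* Main.v *)
Require Import Defs.
From Stdlib Require Import Reals Lra Lia ClassicalEpsilon ZArith FunctionalExtensionality.
Open Scope R_scope.

Lemma abs_le_inv x a : Rabs x <= a -> -a <= x <= a.
Proof. unfold Rabs. destruct (Rcase_abs x); intros; lra. Qed.
Lemma abs_le x a : -a <= x <= a -> Rabs x <= a.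
Proof. unfold Rabs. destruct (Rcase_abs x); intros; lra. Qed.

Lemma ln_nonpos_arg x : x <= 0 -> ln x = 0.
Proof. intros H. unfold ln. destruct (Rlt_dec 0 x); [exfalso; lra|reflexivity]. Qed.

Lemma ln_le_mono x y : 0 < x -> x <= y -> ln x <= ln y.
Proof. intros Hx Hxy. destruct (Req_dec x y) as [->|Hne]; [lra|]. left. apply ln_increasing; lra. Qed.

Lemma ln_le_xm1 x : 0 < x -> ln x <= x - 1.
Proof. intros Hx. pose proof (exp_ineq1_le (ln x)). rewrite exp_ln in H by lra. lra. Qed.

Lemma ln_ge1_nonneg x : 1 <= x -> 0 <= ln x.
Proof. intros H. rewrite <- ln_1. apply ln_le_mono; lra. Qed.

Lemma ln_le1_nonpos x : x <= 1 -> ln x <= 0.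
Proof. intros H. destruct (Rle_dec x 0). rewrite ln_nonpos_arg; lra. rewrite <- ln_1. apply ln_le_mono; lra. Qed.

Lemma logplus_le1 x : x <= 1 -> logplus x = 0.
Proof. intros H. unfold logplus. pose proof (ln_le1_nonpos x H). unfold Rmax. destruct (Rle_dec 0 (ln x)); lra. Qed.

Lemma logplus_ge1 x : 1 <= x -> logplus x = ln x.
Proof. intros H. unfold logplus. pose proof (ln_ge1_nonneg x H). unfold Rmax. destruct (Rle_dec 0 (ln x)); lra. Qed.

Lemma logplus_nonneg x : 0 <= logplus x.
Proof. unfold logplus. apply Rmax_l. Qed.

Lemma logplus_mono x y : x <= y -> logplus x <= logplus y.
Proof. intros H. destruct (Rle_dec x 1).
  rewrite logplus_le1 by lra. apply logplus_nonneg.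
  rewrite !logplus_ge1 by lra. apply ln_le_mono; lra. Qed.

Lemma logplus_lip x y : 0 <= x -> 0 <= y -> Rabs (logplus x - logplus y) <= Rabs (x - y).
Proof.
  intros Hx Hy.
  assert (K: forall a b, 0 <= a -> a <= b -> Rabs (logplus b - logplus a) <= b - a).
  { intros a b Ha Hab. destruct (Rle_dec b 1).
    - rewrite !logplus_le1 by lra. rewrite Rminus_diag, Rabs_R0. lra.
    - rewrite (logplus_ge1 b) by lra. destruct (Rle_dec a 1).
      + rewrite logplus_le1 by lra. pose proof (ln_le_xm1 b). pose proof (ln_ge1_nonneg b).
        rewrite Rabs_right; lra.
      + rewrite logplus_ge1 by lra.
        assert (ln b - ln a = ln (b / a)).
        { unfold Rdiv. rewrite ln_mult, ln_Rinv; lra || (apply Rinv_0_lt_compat; lra). }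
        assert (b / a <= 1 + (b - a)).
        { apply Rmult_le_reg_r with a; [lra|]. unfold Rdiv. rewrite Rmult_assoc, Rinv_l by lra. nra. }
        pose proof (ln_le_xm1 (b/a)). assert (0 < b / a) by (apply Rdiv_lt_0_compat; lra).
        assert (0 <= ln b - ln a) by (assert (ln a <= ln b) by (apply ln_le_mono; lra); lra).
        rewrite Rabs_right; lra. }
  destruct (Rle_dec x y).
  - rewrite Rabs_minus_sym. rewrite (Rabs_left1 (x - y)) by lra. specialize (K x y Hx r). lra.
  - rewrite (Rabs_right (x - y)) by lra. apply K; lra.
Qed.

Lemma exp_half_le2 : exp (1/2) <= 2.
Proof.
  assert (exp (1/2) * exp (1/2) = exp 1) by (rewrite <- exp_plus; f_equal; lra).
  pose proof exp_le_3. pose proof (exp_pos (1/2)). nra.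
Qed.

Lemma abs_ln_bounds s : 0 < s -> Rabs (ln s) <= 1/2 -> 1/2 <= s <= 2.
Proof.
  intros Hs H. rewrite <- (exp_ln s) by lra. apply abs_le_inv in H. pose proof exp_half_le2.
  split.
  - assert (exp (-(1/2)) <= exp (ln s)) by (destruct (Req_dec (-(1/2)) (ln s)) as [E|E]; [rewrite E; lra| left; apply exp_increasing; lra]).
    assert (exp (-(1/2)) * exp (1/2) = 1) by (rewrite <- exp_plus, <- exp_0; f_equal; lra).
    pose proof (exp_pos (1/2)). nra.
  - assert (exp (ln s) <= exp (1/2)) by (destruct (Req_dec (ln s) (1/2)) as [E|E]; [rewrite E; lra| left; apply exp_increasing; lra]).
    lra.
Qed.

Lemma ln_1p_bound t : Rabs t <= 1/2 -> Rabs (ln (1 + t)) <= 2 * Rabs t.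
Proof.
  intros H. apply abs_le_inv in H as [H1 H2].
  apply abs_le. split.
  -
    destruct (Rle_dec 0 t).
    + assert (0 <= ln (1+t)) by (apply ln_ge1_nonneg; lra). rewrite Rabs_right; lra.
    + rewrite Rabs_left by lra.
      (* need ln(1+t) >= 2t, i.e. exp(2t) <= 1 + t *)
      assert (E: exp (-(2*t)) * exp (2*t) = 1) by (rewrite <- exp_plus, <- exp_0; f_equal; lra).
      pose proof (exp_ineq1_le (-(2*t))).
      assert (exp (2*t) <= 1 + t).
      { assert (0 < exp (2*t)) by apply exp_pos.
        assert ((1 - 2*t) * exp (2*t) <= 1) by nra.
        assert ((1 - 2*t) * (1 + t) >= 1) by nra. nra. }
      assert (ln (exp (2*t)) <= ln (1+t)) by (apply ln_le_mono; [apply exp_pos|lra]).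
      rewrite ln_exp in *. lra.
  - pose proof (ln_le_xm1 (1+t) ltac:(lra)). pose proof (Rle_abs t). pose proof (Rabs_pos t). lra.
Qed.

Lemma exp_m1_bound x : Rabs x <= 1/2 -> Rabs (exp x - 1) <= 2 * Rabs x.
Proof.
  intros H. apply abs_le_inv in H as [H1 H2]. apply abs_le. pose proof (exp_ineq1_le x).
  pose proof (exp_ineq1_le (-x)).
  assert (E: exp (-x) * exp x = 1) by (rewrite <- exp_plus, <- exp_0; f_equal; lra).
  pose proof (exp_pos x). pose proof (exp_pos (-x)).
  split.
  - pose proof (Rle_abs (-x)) as Hx. rewrite Rabs_Ropp in Hx. pose proof (Rabs_pos x). lra.
  - assert ((1 - x) * exp x <= 1) by nra.
    destruct (Rle_dec 0 x).
    + rewrite Rabs_right by lra. nra.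
    + rewrite Rabs_left by lra. nra.
Qed.

Lemma pow_ge_x_sq x d : 1 <= x -> (2 <= d)%nat -> x * x <= x ^ d.
Proof. intros Hx Hd. replace (x * x) with (x ^ 2) by ring. apply Rle_pow; lia || lra. Qed.

Lemma GL_large (d : nat) A x y s e :
  (2 <= d)%nat -> 1 <= A -> 0 <= y -> 0 < s -> Rabs (ln s) <= 1/2 -> 0 <= e <= 1/4 ->
  8 * A <= x ->
  Rabs (s * y - x ^ d) <= A * x ^ (d - 1) + e * x ^ d ->
  2 * x <= y /\ Rabs (ln y - INR d * ln x) <= 2 * A / x + 2 * e + Rabs (ln s).
Proof.
  intros Hd HA Hy Hs Hls He Hx H.
  assert (Hx1 : 8 <= x) by lra.
  assert (Hxd : 0 < x ^ d) by (apply pow_lt; lra).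
  assert (Hxd1 : x ^ d = x ^ (d - 1) * x).
  { replace d with (S (d - 1)) at 1 by lia. simpl. ring. }
  set (t := (s * y - x ^ d) / x ^ d).
  assert (Ht : Rabs t <= A / x + e).
  { unfold t. unfold Rdiv. rewrite Rabs_mult, Rabs_inv, (Rabs_right (x^d)) by lra.
    apply Rmult_le_reg_r with (x ^ d); [lra|]. rewrite Rmult_assoc, Rinv_l by lra.
    assert (E: (A / x + e) * x ^ d = A * x^(d-1) + e * x^d) by (rewrite Hxd1; field; lra).
    unfold Rdiv in E. rewrite E. lra. }
  assert (A / x <= 1/8).
  { apply Rmult_le_reg_r with x; [lra|]. unfold Rdiv. rewrite Rmult_assoc, Rinv_l by lra. lra. }
  assert (Ht2 : Rabs t <= 1/2) by lra.
  assert (Hsy : s * y = x ^ d * (1 + t)) by (unfold t; field; lra).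
  pose proof (abs_ln_bounds s Hs Hls) as [Hs1 Hs2].
  pose proof (abs_le_inv _ _ Ht2) as [Ht3 Ht4].
  assert (Hy' : y = x ^ d * (1 + t) / s) by (rewrite <- Hsy; field; lra).
  assert (Hxx : x * x <= x ^ d) by (apply pow_ge_x_sq; lra || lia).
  split.
  - assert (s * y >= 4 * x) by nra. nra.
  - rewrite Hy'. unfold Rdiv. rewrite ln_mult, ln_mult, ln_Rinv, ln_pow by (try lra; try apply Rinv_0_lt_compat; try lra; try apply Rmult_lt_0_compat; try lra).
    pose proof (ln_1p_bound t Ht2).
    replace (INR d * ln x + ln (1 + t) + - ln s - INR d * ln x) with (ln (1 + t) - ln s) by ring.
    unfold Rminus. eapply Rle_trans; [apply Rabs_triang|]. rewrite Rabs_Ropp.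
    assert (2 * Rabs t <= 2 * A / x + 2 * e) by (unfold Rdiv in *; lra). lra.
Qed.

Lemma logplus_Rmax x : 0 <= x -> ln (Rmax 1 x) = logplus x.
Proof. intros Hx. unfold Rmax. destruct (Rle_dec 1 x).
  rewrite logplus_ge1 by lra. reflexivity. rewrite logplus_le1 by lra. apply ln_1. Qed.

Lemma GL (d : nat) A x y s e :
  (2 <= d)%nat -> 1 <= A -> 0 <= x -> 0 <= y -> 0 < s -> Rabs (ln s) <= 1/2 -> 0 <= e <= 1/4 ->
  Rabs (s * y - x ^ d) <= A * Rmax 1 x ^ (d - 1) + e * Rmax 1 x ^ d ->
  Rabs (logplus y - INR d * logplus x) <= INR d * ln (8 * A) + 2.
Proof.
  intros Hd HA Hx Hy Hs Hls He H.
  assert (HdR : 2 <= INR d) by (replace 2 with (INR 2) by (simpl; lra); apply le_INR; lia).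
  assert (H8A : 0 <= ln (8 * A)) by (apply ln_ge1_nonneg; lra).
  set (X := Rmax 1 x) in *.
  assert (HX1 : 1 <= X) by apply Rmax_l. assert (HxX : x <= X) by apply Rmax_r.
  assert (HXd : 1 <= X ^ d) by (apply pow_R1_Rle; lra).
  assert (HXd1 : X ^ (d-1) <= X ^ d) by (apply Rle_pow; lia || lra).
  pose proof (abs_ln_bounds s Hs Hls) as [Hs1 Hs2].
  assert (U : logplus y <= ln (8 * A) + INR d * logplus x).
  { destruct (Rle_dec y 1).
    - rewrite logplus_le1 by lra. pose proof (logplus_nonneg x). nra.
    - rewrite logplus_ge1 by lra.
      assert (x ^ d <= X ^ d) by (apply pow_incr; lra).
      pose proof (abs_le_inv _ _ H) as [_ H2].
      assert (y <= 8 * A * X ^ d).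
      { assert (A * X ^ (d-1) <= A * X ^ d) by (apply Rmult_le_compat_l; lra).
        assert (e * X ^ d <= 1/4 * X ^ d) by (apply Rmult_le_compat_r; lra).
        assert (s * y <= (9/4) * A * X ^ d) by nra. nra. }
      assert (Hl : ln y <= ln (8 * A * X ^ d)) by (apply ln_le_mono; lra).
      rewrite ln_mult, ln_pow in Hl by (try apply pow_lt; lra).
      unfold X in Hl. rewrite logplus_Rmax in Hl by lra. lra. }
  assert (L : INR d * logplus x <= logplus y + INR d * ln (8 * A) + 2).
  { destruct (Rle_dec x (8 * A)).
    - assert (logplus x <= ln (8 * A)) by (rewrite <- logplus_ge1 by lra; apply logplus_mono; lra).
      pose proof (logplus_nonneg y). nra.
    - assert (HX : X = x) by (unfold X, Rmax; destruct (Rle_dec 1 x); lra).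
      rewrite HX in H.
      destruct (GL_large d A x y s e) as [G1 G2]; try lra; auto.
      rewrite logplus_ge1 by lra. rewrite (logplus_ge1 y) by lra.
      pose proof (abs_le_inv _ _ G2) as [G3 _].
      assert (2 * A / x <= 1/4).
      { apply Rmult_le_reg_r with x; [lra|]. unfold Rdiv. rewrite Rmult_assoc, Rinv_l by lra. lra. }
      pose proof (Rabs_pos (ln s)). assert (0 <= INR d * ln (8 * A)) by (apply Rmult_le_pos; lra). lra. }
  apply abs_le. split.
  - lra.
  - pose proof (logplus_nonneg x). nra.
Qed.

Lemma lim_seq_eq u L : Un_cv u L -> lim_seq u = L.
Proof.
  intros H. unfold lim_seq.
  assert (Ex : exists L', Un_cv u L') by (exists L; exact H).
  pose proof (epsilon_spec (inhabits 0) (fun L => Un_cv u L) Ex) as H2. simpl in H2.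
  eapply UL_sequence; eauto.
Qed.

Lemma cv_bound u L c B n0 : Un_cv u L -> (forall m, (n0 <= m)%nat -> Rabs (u m - c) <= B) -> Rabs (L - c) <= B.
Proof.
  intros Hcv Hb. destruct (Rle_dec (Rabs (L - c)) B) as [|Hn]; [assumption|].
  exfalso. set (eps := Rabs (L - c) - B).
  assert (He : eps > 0) by (unfold eps; lra).
  destruct (Hcv eps He) as [N HN].
  specialize (HN (max N n0) ltac:(lia)). specialize (Hb (max N n0) ltac:(lia)).
  unfold R_dist in HN.
  assert (Rabs (L - c) <= Rabs (L - u (max N n0)) + Rabs (u (max N n0) - c)).
  { replace (L - c) with ((L - u (max N n0)) + (u (max N n0) - c)) by ring. apply Rabs_triang. }
  rewrite Rabs_minus_sym in HN. unfold eps in HN. lra.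
Qed.

Lemma pow_ge_S (d : R) n : 2 <= d -> INR n + 1 <= d ^ n.
Proof. intros Hd. induction n. simpl; lra. rewrite S_INR. simpl. assert (1 <= d ^ n) by (apply pow_R1_Rle; lra). nra. Qed.

Lemma geo_conv (a : nat -> R) K d : 2 <= d -> 0 <= K ->
  (forall n, Rabs (a (S n) - a n) <= K / d ^ (S n)) ->
  exists L, Un_cv a L /\ forall n, Rabs (L - a n) <= K / d ^ n.
Proof.
  intros Hd HK H.
  assert (Hpos : forall n, 0 < d ^ n) by (intros; apply pow_lt; lra).
  assert (P : forall n p, Rabs (a (n + p)%nat - a n) <= K * (/ d ^ n - / d ^ (n + p)) / (d - 1)).
  { intros n p. induction p.
    - rewrite Nat.add_0_r. rewrite Rminus_diag, Rabs_R0. unfold Rdiv. rewrite Rminus_diag. rewrite Rmult_0_r, Rmult_0_l. lra.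
    - replace (n + S p)%nat with (S (n + p)) by lia.
      eapply Rle_trans. { replace (a (S (n + p)) - a n) with ((a (S (n+p)) - a (n+p)%nat) + (a (n+p)%nat - a n)) by ring. apply Rabs_triang. }
      specialize (H (n + p)%nat). 
      assert (E : K * (/ d ^ n - / d ^ S (n + p)) / (d - 1) = K * (/ d ^ n - / d ^ (n + p)) / (d - 1) + K / d ^ S (n + p)).
      { simpl. field. pose proof (Hpos (n+p)%nat). pose proof (Hpos n). repeat split; lra. }
      rewrite E. lra. }
  assert (P2 : forall n p, Rabs (a (n + p)%nat - a n) <= K / d ^ n).
  { intros n p. eapply Rle_trans; [apply P|].
    assert (0 < / d ^ (n+p)) by (apply Rinv_0_lt_compat; auto).
    assert (0 < / d ^ n) by (apply Rinv_0_lt_compat; auto).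
    unfold Rdiv.
    assert (Hz : 0 < / (d - 1) <= 1).
    { split. apply Rinv_0_lt_compat; lra. rewrite <- Rinv_1. apply Rinv_le_contravar; lra. }
    assert (K * (/ d ^ n - / d ^ (n + p)) * / (d - 1) <= K * / d ^ n * / (d - 1)) by (apply Rmult_le_compat_r; nra).
    assert (K * / d ^ n * / (d - 1) <= K * / d ^ n) by (rewrite <- (Rmult_1_r (K * / d ^ n)) at 2; apply Rmult_le_compat_l; nra).
    lra. }
  assert (Cau : Cauchy_crit a).
  { intros eps Heps.
    destruct (archimed (K / eps)) as [Ha _].
    destruct (Rle_dec 0 (IZR (up (K / eps)))) as [Hu|Hu]; [|exfalso; assert (0 <= K/eps) by (unfold Rdiv; apply Rmult_le_pos; [lra| left; apply Rinv_0_lt_compat; lra]); lra].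
    exists (Z.to_nat (up (K / eps))).
    set (N0 := Z.to_nat (up (K / eps))).
    assert (HN0 : K / eps < INR N0 + 1).
    { unfold N0. rewrite INR_IZR_INZ. rewrite Z2Nat.id. lra. apply le_IZR. lra. }
    assert (Hgen : forall n, (n >= N0)%nat -> K / d ^ n < eps).
    { intros n Hn. pose proof (pow_ge_S d n Hd). assert (INR N0 <= INR n) by (apply le_INR; lia).
      apply Rmult_lt_reg_r with (d ^ n / eps). apply Rdiv_lt_0_compat; auto.
      replace (K / d ^ n * (d ^ n / eps)) with (K / eps) by (field; split; [lra| pose proof (Hpos n); lra]).
      replace (eps * (d ^ n / eps)) with (d ^ n) by (field; lra). lra. }
    intros n m Hn Hm. unfold R_dist.
    destruct (le_dec n m).
    - replace m with (n + (m - n))%nat by lia. rewrite Rabs_minus_sym. eapply Rle_lt_trans; [apply P2|]. apply Hgen; lia.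
    - replace n with (m + (n - m))%nat by lia. eapply Rle_lt_trans; [apply P2|]. apply Hgen; lia. }
  destruct (R_complete a Cau) as [L HL].
  exists L. split; auto. intros n.
  apply (cv_bound a L (a n) _ n HL). intros m Hm. replace m with (n + (m - n))%nat by lia. apply P2.
Qed.

Lemma seq_conv (t : nat -> R) (d : nat) C : (2 <= d)%nat -> 0 <= C ->
  (forall n, Rabs (t (S n) - INR d * t n) <= C) ->
  exists L, Un_cv (fun n => / (INR d ^ n) * t n) L /\ forall n, Rabs (L - / (INR d ^ n) * t n) <= C / INR d ^ n.
Proof.
  intros Hd HC H.
  assert (HdR : 2 <= INR d) by (replace 2 with (INR 2) by (simpl; lra); apply le_INR; lia).
  apply geo_conv; auto.
  intros n. simpl.
  assert (0 < INR d ^ n) by (apply pow_lt; lra).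
  replace (/ (INR d * INR d ^ n) * t (S n) - / INR d ^ n * t n) with ((t (S n) - INR d * t n) / (INR d * INR d ^ n)) by (field; lra).
  unfold Rdiv. rewrite Rabs_mult. rewrite (Rabs_right (/ _)). apply Rmult_le_compat_r. left; apply Rinv_0_lt_compat; nra. apply H.
  left; apply Rinv_0_lt_compat; nra.
Qed.

From Coquelicot Require Import Coquelicot.
Open Scope R_scope.

Ltac cring := repeat match goal with |- context[csum ?f ?n] => let x := fresh "cs" in set (x := csum f n); clearbody x end;
  match goal with |- @eq _ ?a ?b => change (@eq C a b); ring end.

Lemma Cnorm_Cmod x : Cnorm x = Cmod x.
Proof. unfold Cnorm, Cmod. f_equal. simpl. ring. Qed.

Lemma Cpow_eq a n : Defs.Cpow a n = (a ^ n)%C.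
Proof. induction n; simpl; [reflexivity| rewrite IHn; reflexivity]. Qed.

Lemma Cmul_eq a b : Cmul a b = (a * b)%C.
Proof. reflexivity. Qed.
Lemma Cadd_eq a b : Cadd a b = (a + b)%C.
Proof. reflexivity. Qed.

Lemma csum_bound (f : nat -> C) n : Cmod (csum f n) <= sum_f_R0 (fun k => Cmod (f k)) n.
Proof.
  induction n; simpl. lra.
  change Cadd with Cplus. eapply Rle_trans. apply Cmod_triangle. lra.
Qed.

Lemma csum_ext (f g : nat -> C) n : (forall k, (k <= n)%nat -> f k = g k) -> csum f n = csum g n.
Proof.
  induction n; intros H; simpl. apply H; lia.
  rewrite IHn by (intros; apply H; lia). rewrite H by lia. reflexivity.
Qed.

Lemma csum_plus (f g : nat -> C) n : csum (fun k => f k + g k)%C n = (csum f n + csum g n)%C.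
Proof. induction n; simpl. reflexivity. change Cadd with Cplus; rewrite IHn. cring. Qed.

Lemma csum_minus (f g : nat -> C) n : csum (fun k => f k - g k)%C n = (csum f n - csum g n)%C.
Proof. induction n; simpl. reflexivity. change Cadd with Cplus; rewrite IHn. cring. Qed.

Lemma csum_mul_l (c : C) (f : nat -> C) n : (c * csum f n)%C = csum (fun k => c * f k)%C n.
Proof. induction n; simpl. reflexivity. change Cadd with Cplus; rewrite <- IHn. cring. Qed.

Lemma csum_mul_r (c : C) (f : nat -> C) n : (csum f n * c)%C = csum (fun k => f k * c)%C n.
Proof. induction n; simpl. reflexivity. change Cadd with Cplus; rewrite <- IHn. cring. Qed.

Lemma csum_zero n : csum (fun _ => RtoC 0) n = RtoC 0.
Proof. induction n; simpl. reflexivity. change Cadd with Cplus; rewrite IHn. cring. Qed.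

Lemma csum_exchange (F : nat -> nat -> C) N d :
  csum (fun j => csum (fun m => F j m) d) N = csum (fun m => csum (fun j => F j m) N) d.
Proof.
  induction N; simpl.
  - reflexivity.
  - change Cadd with Cplus; rewrite IHN. rewrite <- csum_plus. reflexivity.
Qed.

Definition zap (b : bool) (x : C) : C := if b then RtoC 0 else x.

Lemma csum_single (f : nat -> C) k n : (k <= n)%nat ->
  csum f n = (f k + csum (fun i => zap (Nat.eqb i k) (f i)) n)%C.
Proof.
  induction n; intros Hk.
  - assert (k = 0)%nat by lia. subst. simpl. unfold zap. simpl. cring.
  - destruct (Nat.eq_dec k (S n)) as [->|Hne].
    + cbn [csum]. rewrite Nat.eqb_refl.
      rewrite (csum_ext (fun i => zap (Nat.eqb i (S n)) (f i)) f n).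
      unfold zap. change Cadd with Cplus. cring.
      intros i Hi. destruct (Nat.eqb_spec i (S n)); [lia|reflexivity].
    + cbn [csum]. rewrite IHn by lia. destruct (Nat.eqb_spec (S n) k); [lia|]. unfold zap at 3. change Cadd with Cplus. cring.
Qed.

Lemma sum_le (f g : nat -> R) n : (forall k, (k <= n)%nat -> f k <= g k) -> sum_f_R0 f n <= sum_f_R0 g n.
Proof. induction n; intros H; simpl. apply H; lia. assert (f (S n) <= g (S n)) by (apply H; lia).
  assert (sum_f_R0 f n <= sum_f_R0 g n) by (apply IHn; intros; apply H; lia). lra. Qed.

Lemma sum_mul_r (f : nat -> R) c n : sum_f_R0 (fun k => f k * c) n = sum_f_R0 f n * c.
Proof. induction n; simpl. reflexivity. rewrite IHn. ring. Qed.

Lemma sum_nonneg (f : nat -> R) n : (forall k, (k <= n)%nat -> 0 <= f k) -> 0 <= sum_f_R0 f n.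
Proof. induction n; intros H; simpl. apply H; lia. assert (0 <= f (S n)) by (apply H; lia).
  assert (0 <= sum_f_R0 f n) by (apply IHn; intros; apply H; lia). lra. Qed.

Lemma sum_ge_term (f : nat -> R) k n : (k <= n)%nat -> (forall i, (i <= n)%nat -> 0 <= f i) -> f k <= sum_f_R0 f n.
Proof. induction n; intros Hk H; simpl.
  - assert (k = 0)%nat by lia; subst; lra.
  - destruct (Nat.eq_dec k (S n)) as [->|Hne].
    + assert (0 <= sum_f_R0 f n) by (apply sum_nonneg; intros; apply H; lia). lra.
    + assert (f k <= sum_f_R0 f n) by (apply IHn; [lia| intros; apply H; lia]).
      assert (0 <= f (S n)) by (apply H; lia). lra.
Qed.

Lemma dsum_bound (G : nat -> nat -> C) (a : nat -> nat -> R) K N d :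
  0 <= K ->
  (forall j m, (j <= N)%nat -> (m <= d)%nat -> Cmod (G j m) <= a j m * K) ->
  Cmod (csum (fun j => csum (fun m => G j m) d) N) <=
  sum_f_R0 (fun j => sum_f_R0 (fun m => a j m) d) N * K.
Proof.
  intros HK H. eapply Rle_trans. apply csum_bound.
  rewrite <- sum_mul_r. apply sum_le. intros j Hj.
  eapply Rle_trans. apply csum_bound. rewrite <- sum_mul_r. apply sum_le. intros m Hm.
  apply H; auto.
Qed.

Lemma dsum_single (F : nat -> nat -> C) j0 m0 N d : (j0 <= N)%nat -> (m0 <= d)%nat ->
  csum (fun j => csum (fun m => F j m) d) N =
  (F j0 m0 + csum (fun j => csum (fun m => zap (andb (Nat.eqb j j0) (Nat.eqb m m0)) (F j m)) d) N)%C.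
Proof.
  intros Hj Hm.
  rewrite (csum_single _ j0 N Hj). rewrite (csum_single (fun m => F j0 m) m0 d Hm).
  rewrite (csum_single (fun j => csum (fun m => zap (andb (Nat.eqb j j0) (Nat.eqb m m0)) (F j m)) d) j0 N Hj).
  rewrite Nat.eqb_refl. simpl andb.
  rewrite (csum_single (fun m => zap (Nat.eqb m m0) (F j0 m)) m0 d Hm).
  rewrite Nat.eqb_refl.
  rewrite (csum_ext (fun j => zap (Nat.eqb j j0) (csum (fun m => F j m) d))
    (fun j => zap (Nat.eqb j j0) (csum (fun m => zap (andb (Nat.eqb j j0) (Nat.eqb m m0)) (F j m)) d)) N).
  rewrite (csum_ext (fun i => zap (Nat.eqb i m0) (zap (Nat.eqb i m0) (F j0 i)))
    (fun m => zap (Nat.eqb m m0) (F j0 m)) d).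
  change (zap true (F j0 m0)) with (RtoC 0). cring.
  - intros i _. unfold zap. destruct (Nat.eqb_spec i m0); reflexivity.
  - intros i _. unfold zap. destruct (Nat.eqb_spec i j0); reflexivity.
Qed.

Lemma pow_exp X n : 0 < X -> X ^ n = exp (INR n * ln X).
Proof. intros HX. rewrite <- (exp_ln X) at 1 by lra. induction n. simpl. rewrite Rmult_0_l, exp_0. reflexivity.
  rewrite S_INR. simpl. rewrite IHn. rewrite <- exp_plus. f_equal. ring. Qed.

Lemma Rpower_exp X a : Rpower X a = exp (a * ln X).
Proof. reflexivity. Qed.

Lemma Cmod_pol r t : 0 <= r -> Cmod (r * cos t, r * sin t) = r.
Proof. intros Hr. unfold Cmod. cbn [fst snd].
  replace ((r * cos t) ^ 2 + (r * sin t) ^ 2) with (r ^ 2 * (Rsqr (sin t) + Rsqr (cos t))) by (unfold Rsqr; ring).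
  rewrite sin2_cos2. rewrite Rmult_1_r. apply sqrt_pow2. lra. Qed.

Definition pol (r t : R) : C := (r * cos t, r * sin t).

Lemma pol_mult r1 t1 r2 t2 : (pol r1 t1 * pol r2 t2)%C = pol (r1 * r2) (t1 + t2).
Proof. unfold pol, Cmult. simpl. rewrite cos_plus, sin_plus. f_equal; ring. Qed.

Lemma pol_pow r t k : (pol r t ^ k)%C = pol (r ^ k) (INR k * t).
Proof. induction k. simpl. unfold pol. rewrite Rmult_0_l, cos_0, sin_0. unfold RtoC. f_equal; ring.
  rewrite Cpow_S, IHk, pol_mult. rewrite S_INR. simpl. f_equal; ring. Qed.

Lemma Cpow_near1 (x : C) t k : Cmod (x - 1) <= t -> t <= 1 -> Cmod (x ^ k - 1) <= 3 ^ k * t.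
Proof.
  intros H Ht. induction k.
  - simpl. replace (RtoC 1 - RtoC 1)%C with (RtoC 0) by (apply injective_projections; simpl; ring).
    rewrite Cmod_0. pose proof (Cmod_ge_0 (x - 1)). lra.
  - replace (x ^ S k - 1)%C with (x * (x ^ k - 1) + (x - 1))%C by (rewrite Cpow_S; ring).
    eapply Rle_trans. apply Cmod_triangle. rewrite Cmod_mult.
    assert (Cmod x <= 2).
    { replace x with ((x - 1) + 1)%C at 1 by ring. eapply Rle_trans. apply Cmod_triangle. rewrite Cmod_1. lra. }
    pose proof (Cmod_ge_0 x). pose proof (Cmod_ge_0 (x ^ k - 1)).
    assert (0 <= 3 ^ k) by (apply pow_le; lra).
    assert (Cmod x * Cmod (x ^ k - 1) <= 2 * (3 ^ k * t)) by (apply Rmult_le_compat; auto).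
    assert (1 <= 3 ^ k) by (apply pow_R1_Rle; lra). pose proof (Cmod_ge_0 (x - 1)).
    simpl. nra.
Qed.

Lemma Cmul_near1 (x y : C) t1 t2 : Cmod (x - 1) <= t1 -> t1 <= 1 -> Cmod (y - 1) <= t2 -> Cmod (x * y - 1) <= 2 * t2 + t1.
Proof.
  intros H1 Ht H2.
  replace (x * y - 1)%C with (x * (y - 1) + (x - 1))%C by ring.
  eapply Rle_trans. apply Cmod_triangle. rewrite Cmod_mult.
  assert (Cmod x <= 2).
  { replace x with ((x - 1) + 1)%C at 1 by ring. eapply Rle_trans. apply Cmod_triangle. rewrite Cmod_1. lra. }
  pose proof (Cmod_ge_0 x). pose proof (Cmod_ge_0 (y - 1)). nra.
Qed.

Lemma Cpow_lip (x y : C) B m : Cmod x <= B -> Cmod y <= B -> 1 <= B ->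
  Cmod (x ^ m - y ^ m) <= INR m * B ^ m * Cmod (x - y).
Proof.
  intros Hx Hy HB. induction m.
  - simpl. replace (RtoC 1 - RtoC 1)%C with (RtoC 0) by (apply injective_projections; simpl; ring).
    rewrite Cmod_0. lra.
  - replace (x ^ S m - y ^ S m)%C with (x * (x ^ m - y ^ m) + (x - y) * y ^ m)%C by (rewrite !Cpow_S; ring).
    eapply Rle_trans. apply Cmod_triangle. rewrite !Cmod_mult, Cmod_pow.
    assert (Cmod y ^ m <= B ^ m) by (apply pow_incr; split; [apply Cmod_ge_0|lra]).
    assert (B ^ m <= B ^ S m) by (apply Rle_pow; lia || lra).
    assert (1 <= B ^ m) by (apply pow_R1_Rle; lra).
    pose proof (Cmod_ge_0 x). pose proof (Cmod_ge_0 (x - y)). pose proof (Cmod_ge_0 (x ^ m - y ^ m)).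
    pose proof (pos_INR m).
    rewrite S_INR. simpl.
    assert (Cmod x * Cmod (x ^ m - y ^ m) <= B * (INR m * B ^ m * Cmod (x - y))) by (apply Rmult_le_compat; auto).
    assert (Cmod (x - y) * Cmod y ^ m <= Cmod (x - y) * (B * B ^ m)).
    { apply Rmult_le_compat_l; auto. simpl in H0. lra. }
    nra.
Qed.

Lemma fin_combine (P : nat -> R -> Prop) n :
  (forall i R R', R <= R' -> P i R -> P i R') ->
  (forall i, (i <= n)%nat -> exists R, P i R) -> exists R, forall i, (i <= n)%nat -> P i R.
Proof.
  intros Hm H. induction n.
  - destruct (H 0%nat ltac:(lia)) as [R HR]. exists R. intros i Hi. assert (i = 0)%nat by lia. subst. auto.
  - destruct IHn as [R1 HR1]. intros i Hi. apply H. lia.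
    destruct (H (S n) ltac:(lia)) as [R2 HR2].
    exists (Rmax R1 R2). intros i Hi. destruct (Nat.eq_dec i (S n)) as [->|Hne].
    + eapply Hm; [apply Rmax_r|auto].
    + eapply Hm; [apply Rmax_l|]. apply HR1. lia.
Qed.

Lemma Rpower_small e eps : e < 0 -> 0 < eps -> exists R, 1 <= R /\ forall X, R <= X -> Rpower X e <= eps.
Proof.
  intros He Heps. exists (exp (Rabs (ln eps / e))). split.
  - rewrite <- exp_0. destruct (Req_dec 0 (Rabs (ln eps / e))) as [E|E]. rewrite E; lra.
    left. apply exp_increasing. pose proof (Rabs_pos (ln eps / e)). lra.
  - intros X HX. assert (HX0 : 0 < X) by (pose proof (exp_pos (Rabs (ln eps / e))); lra).
    rewrite Rpower_exp. rewrite <- (exp_ln eps) by lra.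
    assert (ln (exp (Rabs (ln eps / e))) <= ln X) by (apply ln_le_mono; [apply exp_pos|lra]).
    rewrite ln_exp in H. pose proof (Rle_abs (ln eps / e)).
    assert (ln eps / e <= ln X) by lra.
    assert (e * ln X <= ln eps).
    { apply Rmult_le_reg_r with (- / e). { apply Ropp_0_gt_lt_contravar. apply Rinv_lt_0_compat. lra. }
      replace (ln eps * - / e) with (- (ln eps / e)) by (unfold Rdiv; ring).
      replace (e * ln X * - / e) with (- ln X) by (field; lra). lra. }
    destruct (Req_dec (e * ln X) (ln eps)) as [E|E]. rewrite E; lra. left; apply exp_increasing; lra.
Qed.

Section Main.
Variables (delta d gamma N : nat) (pc : nat -> Cx) (qc : nat -> nat -> Cx) (alpha : R).
Hypothesis Hdelta : (2 <= delta)%nat.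
Hypothesis Hp_monic : pc delta = Cx1.
Hypothesis Hd : (2 <= d)%nat.
Hypothesis Hq_supp : forall n m, (N < n)%nat \/ (d < m)%nat -> qc n m = Cx0.
Hypothesis Hb_monic : qc gamma d = Cx1.
Hypothesis Hb_deg : forall n, (gamma < n)%nat -> qc n d = Cx0.
Hypothesis Hdd : (d < delta)%nat.
Hypothesis Halpha_ub : forall n m, qc n m <> Cx0 -> INR n / (INR delta - INR m) <= alpha.
Hypothesis Halpha_eq : alpha = INR gamma / (INR delta - INR d).

Definition ex (j m : nat) : Prop := INR j + alpha * INR m = alpha * INR delta.
Definition Acst : R := sum_f_R0 (fun j => sum_f_R0 (fun m => Cmod (qc j m)) d) N.
Definition Pcst : R := sum_f_R0 (fun k => Cmod (pc k)) delta.

Lemma dd_pos : 0 < INR delta - INR d.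
Proof. assert (INR d < INR delta) by (apply lt_INR; lia). lra. Qed.

Lemma alpha_nonneg : 0 <= alpha.
Proof. rewrite Halpha_eq. pose proof dd_pos. unfold Rdiv. apply Rmult_le_pos. apply pos_INR. left; apply Rinv_0_lt_compat; lra. Qed.

Lemma gamma_eq : INR gamma = alpha * (INR delta - INR d).
Proof. rewrite Halpha_eq. pose proof dd_pos. field. lra. Qed.

Lemma Cx1_ne0 : Cx1 <> Cx0.
Proof. unfold Cx1, Cx0. intros H. injection H. lra. Qed.

Lemma gamma_le_N : (gamma <= N)%nat.
Proof. destruct (Compare_dec.le_lt_dec gamma N) as [|Hlt]; auto. exfalso. apply Cx1_ne0. rewrite <- Hb_monic. apply Hq_supp. lia. Qed.

Lemma Cmod_Cx1 : Cmod Cx1 = 1.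
Proof. apply Cmod_1. Qed.

Lemma A_ge1 : 1 <= Acst.
Proof.
  unfold Acst. eapply Rle_trans; [|apply (sum_ge_term _ gamma N gamma_le_N)].
  - eapply Rle_trans; [|apply (sum_ge_term _ d d (le_n d))]. cbv beta. rewrite Hb_monic, Cmod_Cx1. lra.
    intros; apply Cmod_ge_0.
  - intros; apply sum_nonneg; intros; apply Cmod_ge_0.
Qed.

Lemma P_ge1 : 1 <= Pcst.
Proof. unfold Pcst. eapply Rle_trans; [|apply (sum_ge_term _ delta delta (le_n delta))]. cbv beta.
  rewrite Hp_monic, Cmod_Cx1. lra. intros; apply Cmod_ge_0. Qed.

Lemma ex_info j m : (m <= d)%nat -> ex j m ->
  (gamma <= j)%nat /\ INR (j - gamma) = alpha * INR (d - m) /\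
  (gamma * (d - m) + d * (j - gamma) = delta * (j - gamma))%nat.
Proof.
  intros Hm He. unfold ex in He. pose proof gamma_eq as Hg. pose proof alpha_nonneg.
  assert (Hdm : INR (d - m) = INR d - INR m) by (apply minus_INR; auto).
  assert (HmR : INR m <= INR d) by (apply le_INR; auto).
  assert (Hj : INR j - INR gamma = alpha * (INR d - INR m)) by lra.
  assert (Hgj : (gamma <= j)%nat).
  { apply INR_le. assert (0 <= alpha * (INR d - INR m)) by (apply Rmult_le_pos; lra). lra. }
  assert (Hjg : INR (j - gamma) = INR j - INR gamma) by (apply minus_INR; auto).
  split; [auto|]. split. rewrite Hjg, Hdm. lra.
  apply INR_eq. rewrite !plus_INR, !mult_INR, Hjg, Hdm, Hj, Hg. ring.
Qed.

Lemma ex_d_iff j : ex j d <-> j = gamma.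
Proof.
  unfold ex. pose proof gamma_eq. split; intros H1.
  - apply INR_eq. lra.
  - subst. lra.
Qed.

Lemma gap_neg j m : (m <= d)%nat -> qc j m <> Cx0 -> ~ ex j m -> INR j + alpha * INR m - alpha * INR delta < 0.
Proof.
  intros Hm Hq Hne. pose proof (Halpha_ub j m Hq).
  assert (INR m < INR delta) by (apply lt_INR; lia).
  assert (INR j <= alpha * (INR delta - INR m)).
  { apply Rmult_le_reg_r with (/ (INR delta - INR m)). apply Rinv_0_lt_compat; lra.
    replace (alpha * (INR delta - INR m) * / (INR delta - INR m)) with alpha by (field; lra). exact H. }
  unfold ex in Hne. destruct (Req_dec (INR j + alpha * INR m) (alpha * INR delta)); [contradiction|]. lra.
Qed.

Lemma gap_le0 j m : (m <= d)%nat -> qc j m <> Cx0 -> INR j + alpha * INR m - alpha * INR delta <= 0.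
Proof.
  intros Hm Hq. destruct (Req_dec (INR j + alpha * INR m) (alpha * INR delta)). lra.
  left. apply gap_neg; auto.
Qed.

Lemma gap_uniform eps : 0 < eps -> exists R, 1 <= R /\ forall X, R <= X ->
  forall j m, (j <= N)%nat -> (m <= d)%nat -> qc j m <> Cx0 -> ~ ex j m ->
  Rpower X (INR j + alpha * INR m - alpha * INR delta) <= eps.
Proof.
  intros Heps.
  assert (H : exists R, forall j, (j <= N)%nat -> (1 <= R /\ forall X, R <= X -> forall m, (m <= d)%nat -> qc j m <> Cx0 -> ~ ex j m ->
    Rpower X (INR j + alpha * INR m - alpha * INR delta) <= eps)).
  { apply fin_combine.
    - intros i R R' HRR' [H1 H2]. split. lra. intros X HX. apply H2. lra.
    - intros j Hj.
      assert (H2 : exists R, forall m, (m <= d)%nat -> (1 <= R /\ forall X, R <= X -> qc j m <> Cx0 -> ~ ex j m ->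
         Rpower X (INR j + alpha * INR m - alpha * INR delta) <= eps)).
      { apply fin_combine.
        - intros i R R' HRR' [H1 H2]. split. lra. intros X HX. apply H2. lra.
        - intros m Hm. destruct (Req_dec (Cmod (qc j m)) 0) as [Hz|Hnz].
          + exists 1. split. lra. intros X _ Hq. exfalso. apply Hq. apply Cmod_eq_0 in Hz. exact Hz.
          + destruct (Req_dec (INR j + alpha * INR m) (alpha * INR delta)) as [He|He].
            * exists 1. split. lra. intros X _ _ Hne. exfalso. apply Hne. exact He.
            * assert (Hq : qc j m <> Cx0) by (intros E; apply Hnz; rewrite E; apply Cmod_0).
              destruct (Rpower_small _ eps (gap_neg j m Hm Hq ltac:(unfold ex; exact He)) Heps) as [R [HR1 HR2]].
              exists R. split. auto. intros X HX _ _. apply HR2. auto. }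
      destruct H2 as [R HR]. exists R. split. destruct (HR 0%nat ltac:(lia)); auto.
      intros X HX m Hm. apply (HR m Hm). auto. }
  destruct H as [R HR]. exists R. split. destruct (HR 0%nat ltac:(lia)); auto.
  intros X HX j m Hj Hm. apply (HR j Hj); auto.
Qed.


Definition pe (Z : C) : C := poly1_eval delta pc Z.
Definition qe (Z Q : C) : C := poly2_eval N d qc Z Q.

Lemma pe_eq Z : pe Z = csum (fun k => pc k * Z ^ k)%C delta.
Proof. unfold pe, poly1_eval. apply csum_ext. intros k _. rewrite Cpow_eq. reflexivity. Qed.

Lemma p_bound Z : 1 <= Cmod Z -> Cmod (pe Z - Z ^ delta) <= Pcst * Cmod Z ^ (delta - 1).
Proof.
  intros HZ. rewrite pe_eq. rewrite (csum_single _ delta delta (le_n _)).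
  rewrite Hp_monic. change Cx1 with (RtoC 1).
  assert (E: (1 * Z ^ delta + csum (fun i => zap (i =? delta)%nat (pc i * Z ^ i)) delta - Z ^ delta)%C = csum (fun i => zap (i =? delta)%nat (pc i * Z ^ i)) delta) by cring.
  rewrite E.
  eapply Rle_trans. apply csum_bound. unfold Pcst. rewrite <- sum_mul_r. apply sum_le.
  intros k Hk. unfold zap. destruct (Nat.eqb_spec k delta).
  - rewrite Cmod_0. apply Rmult_le_pos. apply Cmod_ge_0. apply pow_le. lra.
  - rewrite Cmod_mult, Cmod_pow. apply Rmult_le_compat_l. apply Cmod_ge_0. apply Rle_pow. auto. lia.
Qed.

Lemma p_props Z : 2 * Pcst + 2 <= Cmod Z ->
  Z <> RtoC 0 /\ Cmod Z <= Cmod (pe Z) /\ Cmod (pe Z / Z ^ delta - 1) <= Pcst / Cmod Z.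
Proof.
  intros HZ. pose proof P_ge1 as HP.
  assert (HZ0 : 0 < Cmod Z) by lra.
  assert (Hne : Z <> RtoC 0) by (intros E; rewrite E, Cmod_0 in HZ0; lra).
  pose proof (p_bound Z ltac:(lra)) as Hb.
  assert (Hpow : Cmod Z ^ delta = Cmod Z ^ (delta - 1) * Cmod Z).
  { replace delta with (S (delta - 1)) at 1 by lia. simpl. ring. }
  assert (Hp1 : 1 <= Cmod Z ^ (delta - 1)) by (apply pow_R1_Rle; lra).
  split; [auto|]. split.
  - assert (Cmod (Z ^ delta) <= Cmod (pe Z) + Cmod (pe Z - Z ^ delta)).
    { replace (Z ^ delta)%C with (pe Z - (pe Z - Z ^ delta))%C at 1 by ring.
      unfold Cminus at 1. eapply Rle_trans. apply Cmod_triangle. rewrite Cmod_opp. lra. }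
    rewrite Cmod_pow, Hpow in H.
    assert (Pcst * Cmod Z ^ (delta - 1) * 2 <= Cmod Z ^ (delta - 1) * Cmod Z) by nra.
    assert (Cmod Z <= Cmod Z ^ (delta - 1)).
    { rewrite <- (pow_1 (Cmod Z)) at 1. apply Rle_pow; lia || lra. }
    assert (Cmod Z <= Cmod Z ^ (delta - 1) * Cmod Z / 2) by nra. lra.
  - assert (HZd : (Z ^ delta)%C <> RtoC 0) by (apply Cpow_nz; auto).
    replace (pe Z / Z ^ delta - 1)%C with ((pe Z - Z ^ delta) / Z ^ delta)%C by (field; auto).
    rewrite Cmod_div by auto. rewrite Cmod_pow, Hpow.
    unfold Rdiv. apply Rmult_le_reg_r with (Cmod Z ^ (delta - 1) * Cmod Z). nra.
    rewrite Rmult_assoc, Rinv_l by nra.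
    replace (Pcst * / Cmod Z * (Cmod Z ^ (delta - 1) * Cmod Z)) with (Pcst * Cmod Z ^ (delta - 1)) by (field; lra).
    lra.
Qed.

Definition Zs (z w : C) (n : nat) : C := fst (skew_iter delta N d pc qc n z w).
Definition Qs (z w : C) (n : nat) : C := snd (skew_iter delta N d pc qc n z w).

Lemma Zs_S z w n : Zs z w (S n) = pe (Zs z w n).
Proof. reflexivity. Qed.
Lemma Qs_S z w n : Qs z w (S n) = qe (Zs z w n) (Qs z w n).
Proof. reflexivity. Qed.
Lemma Zs_0 z w : Zs z w 0 = z.
Proof. reflexivity. Qed.
Lemma Qs_0 z w : Qs z w 0 = w.
Proof. reflexivity. Qed.

Lemma Zs_large z w : 2 * Pcst + 2 <= Cmod z -> forall n, Cmod z <= Cmod (Zs z w n).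
Proof.
  intros Hz n. induction n. rewrite Zs_0. lra.
  rewrite Zs_S. destruct (p_props (Zs z w n)) as [_ [H _]]; lra.
Qed.

Lemma Zs_ne0 z w : 2 * Pcst + 2 <= Cmod z -> forall n, Zs z w n <> RtoC 0.
Proof.
  intros Hz n. pose proof (Zs_large z w Hz n). pose proof P_ge1.
  intros E. rewrite E, Cmod_0 in H. lra.
Qed.

Definition rho (z w : C) (n : nat) : R :=
  Rpower (Cmod (Zs z w n)) (alpha * INR delta) / Rpower (Cmod (Zs z w (S n))) alpha.

Lemma rho_pos z w n : 0 < rho z w n.
Proof. unfold rho, Rpower. apply Rdiv_lt_0_compat; apply exp_pos. Qed.

Lemma rho_ln_bound z w n : 2 * Pcst + 2 <= Cmod z ->
  Rabs (ln (rho z w n)) <= 2 * alpha * Pcst / Cmod z.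
Proof.
  intros Hz. pose proof P_ge1. pose proof alpha_nonneg.
  pose proof (Zs_large z w Hz n) as H1. pose proof (Zs_large z w Hz (S n)) as H2.
  set (Z := Zs z w n) in *. set (Z' := Zs z w (S n)) in *.
  assert (HZ' : Z' = pe Z) by apply Zs_S.
  destruct (p_props Z ltac:(lra)) as [HZ0 [_ Hs]].
  assert (HZd : (Z ^ delta)%C <> RtoC 0) by (apply Cpow_nz; auto).
  set (s := (pe Z / Z ^ delta)%C) in *.
  assert (Hms : Cmod s = Cmod Z' / Cmod Z ^ delta) by (unfold s; rewrite HZ', Cmod_div, Cmod_pow; auto).
  assert (HZp : 0 < Cmod Z) by lra. assert (HZp' : 0 < Cmod Z') by lra.
  assert (Hln : ln (rho z w n) = - alpha * ln (Cmod s)).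
  { unfold rho. fold Z Z'. unfold Rdiv. rewrite ln_mult, ln_Rinv. unfold Rpower. rewrite !ln_exp.
    rewrite Hms. unfold Rdiv. rewrite ln_mult, ln_Rinv, ln_pow. ring.
    all: try apply exp_pos; try apply pow_lt; try apply Rinv_0_lt_compat; try apply exp_pos; try apply pow_lt; try lra. }
  rewrite Hln.
  assert (Ht : Rabs (Cmod s - 1) <= Pcst / Cmod z).
  { assert (Cmod (s - 1) <= Pcst / Cmod z).
    { eapply Rle_trans. apply Hs. unfold Rdiv. apply Rmult_le_compat_l. lra. apply Rinv_le_contravar; lra. }
    apply abs_le. split.
    - assert (1 <= Cmod s + Cmod (1 - s)).
      { pose proof (Cmod_triangle s (1 - s)) as HT. replace (s + (1 - s))%C with (RtoC 1) in HT by ring. rewrite Cmod_1 in HT. lra. }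
      replace (1 - s)%C with (- (s - 1))%C in H4 by ring. rewrite Cmod_opp in H4. lra.
    - assert (Cmod s <= Cmod (s - 1) + 1).
      { replace s with ((s - 1) + 1)%C at 1 by ring. eapply Rle_trans. apply Cmod_triangle. rewrite Cmod_1. lra. }
      lra. }
  assert (Pcst / Cmod z <= 1/2).
  { apply Rmult_le_reg_r with (Cmod z). lra. unfold Rdiv. rewrite Rmult_assoc, Rinv_l by lra. lra. }
  pose proof (ln_1p_bound (Cmod s - 1) ltac:(lra)) as Hl.
  replace (1 + (Cmod s - 1)) with (Cmod s) in Hl by ring.
  rewrite Rabs_mult, Rabs_Ropp, Rabs_right by lra.
  replace (2 * alpha * Pcst / Cmod z) with (alpha * (2 * (Pcst / Cmod z))) by (field; lra).
  apply Rmult_le_compat_l. lra. lra.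
Qed.


Fixpoint zeta (z : C) (th : R) (w : C) (n : nat) : C :=
  match n with
  | O => zpow_branch alpha z th
  | S k => (RtoC (rho z w k) * zeta z th w k ^ d / Zs z w k ^ gamma)%C
  end.

Definition vv z th w n : C := (zeta z th w n * Qs z w n)%C.

Lemma Rpower_pos X a : 0 < Rpower X a.
Proof. apply exp_pos. Qed.

Lemma zeta_mod z th w : 2 * Pcst + 2 <= Cmod z -> forall n,
  Cmod (zeta z th w n) = / Rpower (Cmod (Zs z w n)) alpha.
Proof.
  intros Hz n. pose proof P_ge1.
  induction n as [|n IH].
  - simpl. unfold zpow_branch. rewrite Cnorm_Cmod. change (Rpower (Cmod z) (- alpha) * cos (- alpha * th), Rpower (Cmod z) (- alpha) * sin (- alpha * th)) with (pol (Rpower (Cmod z) (- alpha)) (- alpha * th)).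
    unfold pol. rewrite Cmod_pol. rewrite Rpower_Ropp. rewrite Zs_0. reflexivity. left; apply Rpower_pos.
  - simpl zeta. pose proof (Zs_ne0 z w Hz n) as HZ. pose proof (Zs_large z w Hz n) as HZl. pose proof (Zs_large z w Hz (S n)) as HZl'.
    assert (HZg : (Zs z w n ^ gamma)%C <> RtoC 0) by (apply Cpow_nz; auto).
    rewrite Cmod_div by auto. rewrite !Cmod_mult, Cmod_R, Cmod_pow, Cmod_pow, IH.
    rewrite Rabs_right by (left; apply rho_pos).
    unfold rho. set (L := ln (Cmod (Zs z w n))). set (L' := ln (Cmod (Zs z w (S n)))).
    unfold Rpower. fold L L'.
    rewrite (pow_exp (Cmod (Zs z w n))) by lra. fold L.
    rewrite <- !exp_Ropp. rewrite (pow_exp (exp (- (alpha * L)))) by apply exp_pos. rewrite ln_exp.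
    unfold Rdiv. rewrite <- !exp_Ropp. rewrite <- !exp_plus. f_equal.
    pose proof gamma_eq. replace (INR gamma) with (alpha * (INR delta - INR d)) by lra. ring.
Qed.

Lemma vv_mod z th w n : 2 * Pcst + 2 <= Cmod z ->
  Cmod (vv z th w n) = Cmod (Qs z w n) / Rpower (Cmod (Zs z w n)) alpha.
Proof. intros Hz. unfold vv. rewrite Cmod_mult, zeta_mod by auto. unfold Rdiv. ring. Qed.

Lemma core_id X j m : 0 < X ->
  X ^ j * Rpower X alpha ^ m = Rpower X (alpha * INR delta) * Rpower X (INR j + alpha * INR m - alpha * INR delta).
Proof.
  intros HX. rewrite <- (Rpower_pow j X) by auto. rewrite <- (Rpower_pow m (Rpower X alpha)) by apply Rpower_pos.
  rewrite Rpower_mult. rewrite <- !Rpower_plus. f_equal. ring.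
Qed.

Lemma TB z th w n j m : 2 * Pcst + 2 <= Cmod z ->
  Cmod (zeta z th w (S n) * Zs z w n ^ j * Qs z w n ^ m) =
  rho z w n * Cmod (vv z th w n) ^ m * Rpower (Cmod (Zs z w n)) (INR j + alpha * INR m - alpha * INR delta).
Proof.
  intros Hz. pose proof P_ge1.
  pose proof (Zs_large z w Hz n) as HZl.
  rewrite !Cmod_mult, !Cmod_pow, zeta_mod by auto.
  rewrite vv_mod by auto.
  unfold rho. set (X := Cmod (Zs z w n)). set (X' := Cmod (Zs z w (S n))).
  assert (HX : 0 < X) by (unfold X; lra).
  pose proof (core_id X j m HX) as Hc.
  set (q := Cmod (Qs z w n)).
  pose proof (Rpower_pos X alpha). pose proof (Rpower_pos X' alpha).
  assert (0 < Rpower X alpha ^ m) by (apply pow_lt; auto).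
  assert (E : X ^ j = Rpower X (alpha * INR delta) * Rpower X (INR j + alpha * INR m - alpha * INR delta) / Rpower X alpha ^ m)
    by (rewrite <- Hc; field; lra).
  rewrite E. unfold Rdiv. rewrite Rpow_mult_distr, pow_inv. field. split; lra.
Qed.


Ltac cpow_fix := repeat match goal with |- context[Defs.Cpow ?a ?k] => rewrite (Cpow_eq a k) end.

Lemma vS_expand z th w n :
  vv z th w (S n) = csum (fun j => csum (fun m => (qc j m * (zeta z th w (S n) * Zs z w n ^ j * Qs z w n ^ m))%C) d) N.
Proof.
  unfold vv. rewrite Qs_S. unfold qe, poly2_eval. rewrite csum_mul_l. apply csum_ext. intros j _.
  rewrite csum_mul_l. apply csum_ext. intros m _. cpow_fix. change Cmul with Cmult. cring.
Qed.

Lemma lead_id z th w n : 2 * Pcst + 2 <= Cmod z ->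
  (zeta z th w (S n) * Zs z w n ^ gamma * Qs z w n ^ d = RtoC (rho z w n) * vv z th w n ^ d)%C.
Proof.
  intros Hz. pose proof (Zs_ne0 z w Hz n) as HZ.
  assert (HZg : (Zs z w n ^ gamma)%C <> RtoC 0) by (apply Cpow_nz; auto).
  simpl zeta. unfold vv. rewrite Cpow_mult_l. field. auto.
Qed.

Lemma Rmax_pow_mono x a b : (a <= b)%nat -> Rmax 1 x ^ a <= Rmax 1 x ^ b.
Proof. intros H. apply Rle_pow. apply Rmax_l. auto. Qed.

Lemma pow_le_Rmax x m : 0 <= x -> x ^ m <= Rmax 1 x ^ m.
Proof. intros H. apply pow_incr. split; auto. apply Rmax_r. Qed.

Lemma NS z th w n eg : 2 * Pcst + 2 <= Cmod z -> 0 <= eg ->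
  (forall j m, (j <= N)%nat -> (m <= d)%nat -> qc j m <> Cx0 -> ~ ex j m ->
     Rpower (Cmod (Zs z w n)) (INR j + alpha * INR m - alpha * INR delta) <= eg) ->
  Cmod (vv z th w (S n) - RtoC (rho z w n) * vv z th w n ^ d) <=
  rho z w n * (Acst * Rmax 1 (Cmod (vv z th w n)) ^ (d - 1) + Acst * eg * Rmax 1 (Cmod (vv z th w n)) ^ d).
Proof.
  intros Hz Heg Hgap. pose proof P_ge1.
  pose proof (Zs_large z w Hz n) as HZl.
  set (X := Rmax 1 (Cmod (vv z th w n))).
  assert (HX1 : 1 <= X) by apply Rmax_l.
  assert (Hrho : 0 < rho z w n) by apply rho_pos.
  rewrite vS_expand.
  rewrite (dsum_single _ gamma d N d gamma_le_N (le_n d)).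
  rewrite Hb_monic. change Cx1 with (RtoC 1). rewrite Cmult_1_l. rewrite lead_id by auto.
  match goal with |- Cmod (?a + ?b - ?a) <= _ => let E := fresh in assert (E : (a + b - a)%C = b) by cring; rewrite E end.
  replace (rho z w n * (Acst * X ^ (d - 1) + Acst * eg * X ^ d)) with (Acst * (rho z w n * (X ^ (d - 1) + eg * X ^ d))) by ring.
  unfold Acst.
  apply dsum_bound.
  { apply Rmult_le_pos. lra. apply Rplus_le_le_0_compat; apply pow_le || (apply Rmult_le_pos; [lra| apply pow_le]); lra. }
  intros j m Hj Hm. unfold zap.
  destruct (andb (j =? gamma)%nat (m =? d)%nat) eqn:Hjm.
  { rewrite Cmod_0. apply Rmult_le_pos. apply Cmod_ge_0. apply Rmult_le_pos. lra.
    apply Rplus_le_le_0_compat; [apply pow_le; lra| apply Rmult_le_pos; [lra| apply pow_le; lra]]. }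
  rewrite Cmod_mult.
  destruct (Req_dec (Cmod (qc j m)) 0) as [Hq0|Hq0].
  { rewrite Hq0. lra. }
  apply Rmult_le_compat_l. apply Cmod_ge_0.
  assert (Hq : qc j m <> Cx0) by (intros E; apply Hq0; rewrite E; apply Cmod_0).
  rewrite TB by auto. rewrite Rmult_assoc. apply Rmult_le_compat_l. lra.
  pose proof (Cmod_ge_0 (vv z th w n)).
  assert (HXm : Cmod (vv z th w n) ^ m <= X ^ m) by (apply pow_le_Rmax; auto).
  assert (0 <= Cmod (vv z th w n) ^ m) by (apply pow_le; auto).
  destruct (Req_dec (INR j + alpha * INR m) (alpha * INR delta)) as [He|He].
  - (* exact, so m < d *)
    assert (Hmd : m <> d).
    { intros ->. apply ex_d_iff in He. subst j. rewrite !Nat.eqb_refl in Hjm. discriminate. }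
    replace (INR j + alpha * INR m - alpha * INR delta) with 0 by lra. rewrite Rpower_O by lra.
    assert (X ^ m <= X ^ (d - 1)) by (apply Rmax_pow_mono; lia).
    assert (0 <= eg * X ^ d) by (apply Rmult_le_pos; [lra| apply pow_le; lra]). lra.
  - assert (Rpower (Cmod (Zs z w n)) (INR j + alpha * INR m - alpha * INR delta) <= eg) by (apply Hgap; auto).
    assert (X ^ m <= X ^ d) by (apply Rmax_pow_mono; lia).
    assert (0 <= X ^ (d - 1)) by (apply pow_le; lra).
    pose proof (Rpower_pos (Cmod (Zs z w n)) (INR j + alpha * INR m - alpha * INR delta)).
    assert (Cmod (vv z th w n) ^ m * Rpower (Cmod (Zs z w n)) (INR j + alpha * INR m - alpha * INR delta) <= X ^ d * eg)
      by (apply Rmult_le_compat; lra).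
    lra.
Qed.


Definition hh (x : C) : C := h_eval delta N d qc alpha x.
Definition hq (j m : nat) : C := if Req_EM_T (INR j + alpha * INR m) (alpha * INR delta) then qc j m else Cx0.

Lemma hq_mod j m : Cmod (hq j m) <= Cmod (qc j m).
Proof. unfold hq. destruct (Req_EM_T _ _). lra. change Cx0 with (RtoC 0). rewrite Cmod_0. apply Cmod_ge_0. Qed.

Lemma hh_expand x : hh x = csum (fun j => csum (fun m => (hq j m * x ^ m)%C) d) N.
Proof.
  unfold hh, h_eval, poly1_eval, h_coef. rewrite csum_exchange.
  apply csum_ext. intros m _. cpow_fix. change Cmul with Cmult. rewrite csum_mul_r. reflexivity.
Qed.

Lemma hq_lead : hq gamma d = RtoC 1.
Proof. unfold hq. destruct (Req_EM_T _ _) as [|Hn]. rewrite Hb_monic. reflexivity.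
  exfalso. apply Hn. pose proof gamma_eq. lra. Qed.

Lemma hnorm x : Cmod (hh x - x ^ d) <= Acst * Rmax 1 (Cmod x) ^ (d - 1).
Proof.
  rewrite hh_expand. rewrite (dsum_single _ gamma d N d gamma_le_N (le_n d)).
  rewrite hq_lead, Cmult_1_l.
  match goal with |- Cmod (?a + ?b - ?a) <= _ => let E := fresh in assert (E : (a + b - a)%C = b) by cring; rewrite E end.
  rewrite Rmult_comm. unfold Acst. set (X := Rmax 1 (Cmod x)). assert (1 <= X) by apply Rmax_l.
  rewrite Rmult_comm.
  apply dsum_bound. apply pow_le; lra.
  intros j m Hj Hm. unfold zap. destruct (andb (j =? gamma)%nat (m =? d)%nat) eqn:Hjm.
  { rewrite Cmod_0. apply Rmult_le_pos. apply Cmod_ge_0. apply pow_le; lra. }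
  rewrite Cmod_mult, Cmod_pow. unfold hq. destruct (Req_EM_T _ _) as [He|He].
  - apply Rmult_le_compat_l. apply Cmod_ge_0.
    assert (Hmd : m <> d).
    { intros ->. apply ex_d_iff in He. subst j. rewrite !Nat.eqb_refl in Hjm. discriminate. }
    eapply Rle_trans. apply pow_le_Rmax. apply Cmod_ge_0. apply Rmax_pow_mono. lia.
  - change Cx0 with (RtoC 0). rewrite Cmod_0, Rmult_0_l. apply Rmult_le_pos. apply Cmod_ge_0. apply pow_le; lra.
Qed.

Lemma hlip x y B : Cmod x <= B -> Cmod y <= B -> 1 <= B ->
  Cmod (hh x - hh y) <= Acst * (INR d * B ^ d) * Cmod (x - y).
Proof.
  intros Hx Hy HB. rewrite !hh_expand. rewrite <- csum_minus.
  rewrite (csum_ext _ (fun j => csum (fun m => hq j m * (x ^ m - y ^ m))%C d)).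
  2: { intros j _. rewrite <- csum_minus. apply csum_ext. intros m _. cring. }
  rewrite Rmult_assoc. unfold Acst. apply dsum_bound.
  { apply Rmult_le_pos. apply Rmult_le_pos. apply pos_INR. apply pow_le. lra. apply Cmod_ge_0. }
  intros j m Hj Hm. rewrite Cmod_mult. apply Rmult_le_compat. apply Cmod_ge_0. apply Cmod_ge_0. apply hq_mod.
  eapply Rle_trans. apply Cpow_lip; eauto.
  apply Rmult_le_compat_r. apply Cmod_ge_0. apply Rmult_le_compat. apply pos_INR. apply pow_le; lra.
  apply le_INR; auto. apply Rle_pow; auto.
Qed.


Lemma ex_term_id z th w n j m : 2 * Pcst + 2 <= Cmod z -> (gamma <= j)%nat -> (m <= d)%nat ->
  (zeta z th w (S n) * Zs z w n ^ j * Qs z w n ^ m =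
   RtoC (rho z w n) * zeta z th w n ^ (d - m) * Zs z w n ^ (j - gamma) * vv z th w n ^ m)%C.
Proof.
  intros Hz Hj Hm. pose proof (Zs_ne0 z w Hz n) as HZ.
  assert (HZg : (Zs z w n ^ gamma)%C <> RtoC 0) by (apply Cpow_nz; auto).
  simpl zeta. unfold vv. rewrite Cpow_mult_l.
  replace j with ((j - gamma) + gamma)%nat at 1 by lia.
  replace d with ((d - m) + m)%nat at 1 by lia.
  rewrite !Cpow_add_r. field. auto.
Qed.

Lemma CS z th w n eg eta : 2 * Pcst + 2 <= Cmod z -> 0 <= eg -> 0 <= eta -> rho z w n <= 2 ->
  (forall j m, (j <= N)%nat -> (m <= d)%nat -> qc j m <> Cx0 -> ~ ex j m ->
     Rpower (Cmod (Zs z w n)) (INR j + alpha * INR m - alpha * INR delta) <= eg) ->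
  (forall j m, (j <= N)%nat -> (m <= d)%nat -> ex j m ->
     Cmod (RtoC (rho z w n) * zeta z th w n ^ (d - m) * Zs z w n ^ (j - gamma) - 1) <= eta) ->
  Cmod (vv z th w (S n) - hh (vv z th w n)) <= Acst * ((eta + 2 * eg) * Rmax 1 (Cmod (vv z th w n)) ^ d).
Proof.
  intros Hz Heg Heta Hr2 Hgap HJ. pose proof P_ge1.
  set (X := Rmax 1 (Cmod (vv z th w n))).
  assert (HX1 : 1 <= X) by apply Rmax_l.
  assert (Hrho : 0 < rho z w n) by apply rho_pos.
  assert (HXd : 0 <= X ^ d) by (apply pow_le; lra).
  rewrite vS_expand, hh_expand. rewrite <- csum_minus.
  rewrite (csum_ext _ (fun j => csum (fun m => qc j m * (zeta z th w (S n) * Zs z w n ^ j * Qs z w n ^ m) - hq j m * vv z th w n ^ m)%C d)).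
  2: { intros j _. rewrite <- csum_minus. reflexivity. }
  unfold Acst. apply dsum_bound.
  { apply Rmult_le_pos; lra. }
  intros j m Hj Hm.
  pose proof (Cmod_ge_0 (vv z th w n)) as Hv0.
  assert (HXm : Cmod (vv z th w n) ^ m <= X ^ d).
  { eapply Rle_trans. apply pow_le_Rmax; auto. apply Rmax_pow_mono; auto. }
  assert (Hvm0 : 0 <= Cmod (vv z th w n) ^ m) by (apply pow_le; auto).
  unfold hq. destruct (Req_EM_T _ _) as [He|He].
  - destruct (ex_info j m Hm He) as [Hgj _].
    rewrite ex_term_id by auto.
    match goal with |- Cmod ?t <= _ => let E := fresh in
      assert (E : t = (qc j m * (vv z th w n ^ m * (RtoC (rho z w n) * zeta z th w n ^ (d - m) * Zs z w n ^ (j - gamma) - 1)))%C) by cring;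
      rewrite E end.
    rewrite !Cmod_mult, Cmod_pow. apply Rmult_le_compat_l. apply Cmod_ge_0.
    assert (Cmod (RtoC (rho z w n) * zeta z th w n ^ (d - m) * Zs z w n ^ (j - gamma) - 1) <= eta) by (apply HJ; auto).
    assert (Cmod (vv z th w n) ^ m * Cmod (RtoC (rho z w n) * zeta z th w n ^ (d - m) * Zs z w n ^ (j - gamma) - 1) <= X ^ d * eta)
      by (apply Rmult_le_compat; auto; apply Cmod_ge_0).
    assert (0 <= X ^ d * eg) by (apply Rmult_le_pos; lra). nra.
  - change Cx0 with (RtoC 0).
    match goal with |- Cmod ?t <= _ => let E := fresh in
      assert (E : t = (qc j m * (zeta z th w (S n) * Zs z w n ^ j * Qs z w n ^ m))%C) by cring;
      rewrite E end.
    rewrite Cmod_mult.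
    destruct (Req_dec (Cmod (qc j m)) 0) as [Hq0|Hq0].
    { rewrite Hq0. lra. }
    assert (Hq : qc j m <> Cx0) by (intros E; apply Hq0; rewrite E; apply Cmod_0).
    apply Rmult_le_compat_l. apply Cmod_ge_0.
    rewrite TB by auto.
    assert (Rpower (Cmod (Zs z w n)) (INR j + alpha * INR m - alpha * INR delta) <= eg) by (apply Hgap; auto).
    pose proof (Rpower_pos (Cmod (Zs z w n)) (INR j + alpha * INR m - alpha * INR delta)).
    assert (Cmod (vv z th w n) ^ m * Rpower (Cmod (Zs z w n)) (INR j + alpha * INR m - alpha * INR delta) <= X ^ d * eg)
      by (apply Rmult_le_compat; lra).
    assert (rho z w n * (Cmod (vv z th w n) ^ m * Rpower (Cmod (Zs z w n)) (INR j + alpha * INR m - alpha * INR delta)) <= 2 * (X ^ d * eg))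
      by (apply Rmult_le_compat; try lra; apply Rmult_le_pos; lra).
    assert (0 <= X ^ d * eta) by (apply Rmult_le_pos; lra).
    rewrite Rmult_assoc. nra.
Qed.


Definition Jt z th w n k1 k2 : C := (zeta z th w n ^ k1 * Zs z w n ^ k2)%C.

Lemma J_step z th w n k1 k2 : 2 * Pcst + 2 <= Cmod z ->
  (gamma * k1 + d * k2 = delta * k2)%nat ->
  Jt z th w (S n) k1 k2 = (RtoC (rho z w n) ^ k1 * Jt z th w n k1 k2 ^ d * (Zs z w (S n) / Zs z w n ^ delta) ^ k2)%C.
Proof.
  intros Hz Hk. pose proof (Zs_ne0 z w Hz n) as HZ.
  assert (HZg : (Zs z w n ^ gamma)%C <> RtoC 0) by (apply Cpow_nz; auto).
  assert (HZd : (Zs z w n ^ delta)%C <> RtoC 0) by (apply Cpow_nz; auto).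
  unfold Jt. simpl zeta.
  set (Z := Zs z w n). set (Z' := Zs z w (S n)). set (r := RtoC (rho z w n)). set (ze := zeta z th w n).
  unfold Cdiv. rewrite !Cpow_mult_l. rewrite !Cpow_inv by auto.
  rewrite <- !Cpow_mult_r.
  replace (d * k1)%nat with (k1 * d)%nat by lia. rewrite !Cpow_mult_r.
  assert (E : (Z ^ (gamma * k1) * (Z ^ k2) ^ d = (Z ^ delta) ^ k2)%C).
  { rewrite <- !Cpow_mult_r. rewrite <- Cpow_add_r. f_equal. lia. }
  assert (HZgk : (Z ^ (gamma * k1))%C <> RtoC 0) by (apply Cpow_nz; auto).
  assert (HZdk : ((Z ^ delta) ^ k2)%C <> RtoC 0) by (apply Cpow_nz; auto).
  rewrite <- E. rewrite Cpow_mult_r. field. split; auto. apply Cpow_nz, Cpow_nz; auto. apply Cpow_nz; auto.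
Qed.

Lemma J_zero z th w k1 k2 : 2 * Pcst + 2 <= Cmod z -> is_arg z th ->
  INR k2 = alpha * INR k1 -> Jt z th w 0 k1 k2 = RtoC 1.
Proof.
  intros Hz Harg Hk. pose proof P_ge1.
  assert (Hz0 : 0 < Cmod z) by lra.
  unfold Jt. simpl zeta. rewrite Zs_0.
  unfold zpow_branch. rewrite Cnorm_Cmod.
  change (Rpower (Cmod z) (- alpha) * cos (- alpha * th), Rpower (Cmod z) (- alpha) * sin (- alpha * th)) with (pol (Rpower (Cmod z) (- alpha)) (- alpha * th)).
  unfold is_arg in Harg. rewrite Cnorm_Cmod in Harg.
  replace (z ^ k2)%C with (pol (Cmod z) th ^ k2)%C by (unfold pol; rewrite <- Harg; reflexivity).
  rewrite !pol_pow, pol_mult.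
  replace (INR k1 * (- alpha * th) + INR k2 * th) with 0 by (rewrite Hk; ring).
  replace (Rpower (Cmod z) (- alpha) ^ k1 * Cmod z ^ k2) with 1.
  - unfold pol. rewrite cos_0, sin_0. unfold RtoC. f_equal; ring.
  - rewrite (pow_exp (Cmod z)) by auto. rewrite (pow_exp (Rpower (Cmod z) (- alpha))) by apply Rpower_pos.
    unfold Rpower at 1. rewrite ln_exp. rewrite <- exp_plus. rewrite <- exp_0. f_equal. rewrite Hk. ring.
Qed.

Lemma rho_close z w n : 2 * Pcst + 2 <= Cmod z -> 2 * alpha * Pcst / Cmod z <= 1/2 ->
  Rabs (rho z w n - 1) <= 4 * alpha * Pcst / Cmod z /\ rho z w n <= 2.
Proof.
  intros Hz Hs. pose proof (rho_ln_bound z w n Hz) as Hl. pose proof (rho_pos z w n).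
  assert (Hl2 : Rabs (ln (rho z w n)) <= 1/2) by lra.
  pose proof (exp_m1_bound _ Hl2) as Hb. rewrite exp_ln in Hb by auto.
  split. replace (4 * alpha * Pcst / Cmod z) with (2 * (2 * alpha * Pcst / Cmod z)) by (unfold Rdiv; ring). lra.
  apply abs_ln_bounds; auto.
Qed.

Lemma small_R c t : 0 <= c -> 0 < t -> exists R, 0 < R /\ forall x, R <= x -> c / x <= t.
Proof.
  intros Hc Ht. exists (c / t + 1). split. assert (0 <= c / t) by (unfold Rdiv; apply Rmult_le_pos; [lra| left; apply Rinv_0_lt_compat; lra]). lra.
  intros x Hx. assert (0 <= c / t) by (unfold Rdiv; apply Rmult_le_pos; [lra| left; apply Rinv_0_lt_compat; lra]).
  assert (Hx0 : 0 < x) by lra.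
  apply Rmult_le_reg_r with x; auto. unfold Rdiv. rewrite Rmult_assoc, Rinv_l by lra.
  assert (c <= t * (c / t)) by (unfold Rdiv; field_simplify; lra).
  nra.
Qed.


Lemma J_ind n : forall eta, 0 < eta -> exists R, 2 * Pcst + 2 <= R /\
  forall z th w, R <= Cmod z -> is_arg z th ->
  forall j m, (j <= N)%nat -> (m <= d)%nat -> ex j m -> Cmod (Jt z th w n (d - m) (j - gamma) - 1) <= eta.
Proof.
  pose proof P_ge1 as HP. pose proof alpha_nonneg as Ha.
  induction n as [|n IH]; intros eta Heta.
  - exists (2 * Pcst + 2). split. lra. intros z th w Hz Harg j m Hj Hm He.
    destruct (ex_info j m Hm He) as [_ [Hk _]].
    rewrite J_zero by auto. replace (RtoC 1 - RtoC 1)%C with (RtoC 0) by cring. rewrite Cmod_0. lra.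
  - set (K0 := 3 ^ (N + d)).
    assert (HK0 : 1 <= K0) by (apply pow_R1_Rle; lra).
    set (t := Rmin 1 eta / (5 * K0)).
    assert (Hmin : 0 < Rmin 1 eta) by (apply Rmin_glb_lt; lra).
    assert (Ht : 0 < t) by (unfold t; apply Rdiv_lt_0_compat; lra).
    assert (Ht5 : 5 * K0 * t = Rmin 1 eta) by (unfold t; field; lra).
    assert (Hm1 : Rmin 1 eta <= 1) by apply Rmin_l. assert (Hm2 : Rmin 1 eta <= eta) by apply Rmin_r.
    destruct (IH t Ht) as [R1 [HR1 HIH]].
    destruct (small_R (4 * alpha * Pcst + Pcst) t ltac:(nra) Ht) as [R2 [HR2 HR2']].
    exists (Rmax R1 R2). split. eapply Rle_trans; [apply HR1| apply Rmax_l].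
    intros z th w Hz Harg j m Hj Hm He.
    assert (Hz1 : R1 <= Cmod z) by (eapply Rle_trans; [apply Rmax_l| apply Hz]).
    assert (Hz2 : R2 <= Cmod z) by (eapply Rle_trans; [apply Rmax_r| apply Hz]).
    assert (Hzp : 2 * Pcst + 2 <= Cmod z) by lra.
    assert (Hz0 : 0 < Cmod z) by lra.
    specialize (HR2' (Cmod z) Hz2).
    assert (HaP : 4 * alpha * Pcst / Cmod z <= t).
    { eapply Rle_trans; [|apply HR2']. unfold Rdiv. apply Rmult_le_compat_r. left; apply Rinv_0_lt_compat; lra. lra. }
    assert (HPz : Pcst / Cmod z <= t).
    { eapply Rle_trans; [|apply HR2']. unfold Rdiv. apply Rmult_le_compat_r. left; apply Rinv_0_lt_compat; lra. nra. }
    assert (Ht1 : t <= 1/5) by (assert (5 * t <= 5 * K0 * t) by nra; lra).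
    destruct (rho_close z w n Hzp) as [Hr _].
    { replace (2 * alpha * Pcst / Cmod z) with (/2 * (4 * alpha * Pcst / Cmod z)) by (field; lra). lra. }
    destruct (ex_info j m Hm He) as [Hgj [_ Hnat]].
    rewrite J_step by auto.
    set (k1 := (d - m)%nat). set (k2 := (j - gamma)%nat).
    assert (Hr' : Cmod (RtoC (rho z w n) - 1) <= t).
    { replace (RtoC (rho z w n) - 1)%C with (RtoC (rho z w n - 1)) by (rewrite RtoC_minus; reflexivity). rewrite Cmod_R. lra. }
    assert (HJn : Cmod (Jt z th w n k1 k2 - 1) <= t) by (apply HIH; auto).
    assert (Hs : Cmod (Zs z w (S n) / Zs z w n ^ delta - 1) <= t).
    { rewrite Zs_S. destruct (p_props (Zs z w n)) as [_ [_ Hp]]. pose proof (Zs_large z w Hzp n). lra.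
      eapply Rle_trans. apply Hp. eapply Rle_trans; [|apply HPz]. unfold Rdiv. apply Rmult_le_compat_l. lra.
      apply Rinv_le_contravar. lra. apply Zs_large. auto. }
    assert (E1 : Cmod (RtoC (rho z w n) ^ k1 - 1) <= K0 * t).
    { eapply Rle_trans. apply Cpow_near1; eauto; lra. apply Rmult_le_compat_r. lra. apply Rle_pow. lra. unfold k1; lia. }
    assert (E2 : Cmod (Jt z th w n k1 k2 ^ d - 1) <= K0 * t).
    { eapply Rle_trans. apply Cpow_near1; eauto; lra. apply Rmult_le_compat_r. lra. apply Rle_pow. lra. lia. }
    assert (E3 : Cmod ((Zs z w (S n) / Zs z w n ^ delta) ^ k2 - 1) <= K0 * t).
    { eapply Rle_trans. apply Cpow_near1; eauto; lra. apply Rmult_le_compat_r. lra. apply Rle_pow. lra. unfold k2; lia. }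
    assert (E12 : Cmod (RtoC (rho z w n) ^ k1 * Jt z th w n k1 k2 ^ d - 1) <= 2 * (K0 * t) + K0 * t)
      by (apply Cmul_near1; auto; lra).
    eapply Rle_trans. apply Cmul_near1. apply E12. lra. apply E3. lra.
Qed.


Lemma hh_bound x : Cmod (hh x) <= (Acst + 1) * Rmax 1 (Cmod x) ^ d.
Proof.
  pose proof (hnorm x). pose proof A_ge1.
  set (X := Rmax 1 (Cmod x)) in *. assert (1 <= X) by apply Rmax_l.
  assert (Cmod (hh x) <= Cmod (x ^ d) + Cmod (hh x - x ^ d)).
  { replace (hh x) with (x ^ d + (hh x - x ^ d))%C at 1 by ring. apply Cmod_triangle. }
  rewrite Cmod_pow in H2.
  assert (Cmod x ^ d <= X ^ d) by (apply pow_le_Rmax; apply Cmod_ge_0).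
  assert (X ^ (d - 1) <= X ^ d) by (apply Rmax_pow_mono; lia).
  assert (Acst * X ^ (d - 1) <= Acst * X ^ d) by (apply Rmult_le_compat_l; lra).
  lra.
Qed.

Fixpoint Bnd (M : R) (k : nat) : R :=
  match k with O => Rmax 1 M | S k' => (Acst + 1) * Bnd M k' ^ d end.

Lemma Bnd_ok M c k : Cmod c <= M -> 1 <= Bnd M k /\ Cmod (Nat.iter k hh c) <= Bnd M k.
Proof.
  intros Hc. pose proof A_ge1. induction k.
  - simpl. split. apply Rmax_l. eapply Rle_trans; [apply Hc| apply Rmax_r].
  - destruct IHk as [H1 H2]. simpl Bnd. simpl Nat.iter.
    assert (1 <= Bnd M k ^ d) by (apply pow_R1_Rle; lra).
    split. nra.
    eapply Rle_trans. apply hh_bound. apply Rmult_le_compat_l. lra. apply pow_incr. split.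
    pose proof (Rmax_l 1 (Cmod (Nat.iter k hh c))). lra.
    apply Rmax_lub; lra.
Qed.

Lemma rho_uniform t : 0 < t -> exists R, 2 * Pcst + 2 <= R /\ forall z w n, R <= Cmod z ->
  Rabs (rho z w n - 1) <= t /\ rho z w n <= 2 /\ Rabs (ln (rho z w n)) <= t.
Proof.
  pose proof P_ge1 as HP. pose proof alpha_nonneg as Ha. intros Ht.
  set (t' := Rmin t 1).
  assert (Ht' : 0 < t') by (apply Rmin_glb_lt; lra).
  assert (Ht1 : t' <= t) by apply Rmin_l. assert (Ht2 : t' <= 1) by apply Rmin_r.
  destruct (small_R (4 * alpha * Pcst) t' ltac:(nra) Ht') as [R1 [HR1 HR1']].
  exists (Rmax R1 (2 * Pcst + 2)). split. apply Rmax_r.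
  intros z w n Hz.
  assert (Hz1 : R1 <= Cmod z) by (eapply Rle_trans; [apply Rmax_l| apply Hz]).
  assert (Hz2 : 2 * Pcst + 2 <= Cmod z) by (eapply Rle_trans; [apply Rmax_r| apply Hz]).
  specialize (HR1' _ Hz1).
  assert (E : 2 * alpha * Pcst / Cmod z = /2 * (4 * alpha * Pcst / Cmod z)) by (field; lra).
  assert (Hh : 2 * alpha * Pcst / Cmod z <= 1/2) by lra.
  destruct (rho_close z w n Hz2 Hh) as [H1 H2].
  pose proof (rho_ln_bound z w n Hz2). repeat split; lra.
Qed.

Lemma Bnd_ge1 M k : 1 <= Bnd M k.
Proof. pose proof A_ge1. induction k; simpl. apply Rmax_l. assert (1 <= Bnd M k ^ d) by (apply pow_R1_Rle; lra). nra. Qed.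


Lemma OC M k : forall eps, 0 < eps -> exists R, 2 * Pcst + 2 <= R /\
  forall z th w, R <= Cmod z -> is_arg z th -> Cmod (vv z th w 0) <= M ->
  Cmod (vv z th w k - Nat.iter k hh (vv z th w 0)) <= eps.
Proof.
  pose proof P_ge1 as HP. pose proof alpha_nonneg as Ha. pose proof A_ge1 as HA.
  induction k as [|k IH]; intros eps Heps.
  - exists (2 * Pcst + 2). split. lra. intros. simpl.
    replace (vv z th w 0 - vv z th w 0)%C with (RtoC 0) by ring.
    rewrite Cmod_0. lra.
  - set (B1 := Bnd M k + 1).
    assert (HB1 : 2 <= B1) by (unfold B1; pose proof (Bnd_ge1 M k); lra).
    assert (HB1d : 1 <= B1 ^ d) by (apply pow_R1_Rle; lra).
    set (L := Acst * (INR d * B1 ^ d)).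
    assert (HL : 0 <= L) by (unfold L; apply Rmult_le_pos; [lra| apply Rmult_le_pos; [apply pos_INR| lra]]).
    set (e1 := Rmin 1 (eps / (2 * (L + 1)))).
    assert (He1 : 0 < e1) by (apply Rmin_glb_lt; [lra| apply Rdiv_lt_0_compat; lra]).
    assert (He1a : e1 <= 1) by apply Rmin_l. assert (He1b : e1 <= eps / (2 * (L + 1))) by apply Rmin_r.
    set (tau := eps / (6 * Acst * B1 ^ d)).
    assert (Htau : 0 < tau) by (apply Rdiv_lt_0_compat; [lra| nra]).
    assert (Htau3 : 3 * tau * (Acst * B1 ^ d) = eps / 2) by (unfold tau; field; split; lra).
    set (t3 := Rmin (tau / 3) 1).
    assert (Ht3 : 0 < t3) by (apply Rmin_glb_lt; lra).
    assert (Ht3a : t3 <= tau / 3) by apply Rmin_l. assert (Ht3b : t3 <= 1) by apply Rmin_r.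
    destruct (IH e1 He1) as [R1 [HR1 HIH]].
    destruct (gap_uniform tau Htau) as [R2 [HR2 HR2']].
    destruct (J_ind k (tau / 3) ltac:(lra)) as [R3 [HR3 HR3']].
    destruct (rho_uniform t3 Ht3) as [R4 [HR4 HR4']].
    exists (Rmax (Rmax R1 R2) (Rmax R3 R4)). split.
    { eapply Rle_trans; [apply HR1|]. eapply Rle_trans; [apply Rmax_l| apply Rmax_l]. }
    intros z th w Hz Harg Hc.
    assert (Hz1 : R1 <= Cmod z) by (eapply Rle_trans; [|apply Hz]; eapply Rle_trans; [apply Rmax_l| apply Rmax_l]).
    assert (Hz2 : R2 <= Cmod z) by (eapply Rle_trans; [|apply Hz]; eapply Rle_trans; [apply Rmax_r| apply Rmax_l]).
    assert (Hz3 : R3 <= Cmod z) by (eapply Rle_trans; [|apply Hz]; eapply Rle_trans; [apply Rmax_l| apply Rmax_r]).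
    assert (Hz4 : R4 <= Cmod z) by (eapply Rle_trans; [|apply Hz]; eapply Rle_trans; [apply Rmax_r| apply Rmax_r]).
    assert (Hzp : 2 * Pcst + 2 <= Cmod z) by lra.
    specialize (HIH z th w Hz1 Harg Hc).
    destruct (Bnd_ok M (vv z th w 0) k Hc) as [_ HBk].
    set (c := vv z th w 0) in *.
    set (vk := vv z th w k) in *. set (hk := Nat.iter k hh c) in *.
    assert (Hvk : Cmod vk <= B1).
    { assert (Cmod vk <= Cmod hk + Cmod (vk - hk)).
      { replace vk with (hk + (vk - hk))%C at 1 by ring. apply Cmod_triangle. }
      unfold B1. lra. }
    destruct (HR4' z w k Hz4) as [Hr1 [Hr2 _]].
    assert (HCS : Cmod (vv z th w (S k) - hh vk) <= Acst * ((tau + 2 * tau) * Rmax 1 (Cmod vk) ^ d)).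
    { apply CS; auto; try lra.
      - intros j m Hj Hm Hq Hne. apply HR2'; auto. eapply Rle_trans; [apply Hz2| apply Zs_large; auto].
      - intros j m Hj Hm He.
        assert (HJ := HR3' z th w Hz3 Harg j m Hj Hm He).
        assert (E : (RtoC (rho z w k) * zeta z th w k ^ (d - m) * Zs z w k ^ (j - gamma) - 1)%C
                    = (RtoC (rho z w k) * Jt z th w k (d - m) (j - gamma) - 1)%C) by (unfold Jt; ring).
        rewrite E.
        assert (Hr : Cmod (RtoC (rho z w k) - 1) <= t3).
        { replace (RtoC (rho z w k) - 1)%C with (RtoC (rho z w k - 1)) by (rewrite RtoC_minus; reflexivity). rewrite Cmod_R. lra. }
        eapply Rle_trans. apply Cmul_near1. apply Hr. lra. apply HJ. lra. }
    assert (HX : Rmax 1 (Cmod vk) ^ d <= B1 ^ d).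
    { apply pow_incr. split. pose proof (Rmax_l 1 (Cmod vk)); lra. apply Rmax_lub; lra. }
    assert (HCS' : Cmod (vv z th w (S k) - hh vk) <= eps / 2).
    { eapply Rle_trans. apply HCS. rewrite <- Htau3.
      assert (Acst * (3 * tau * Rmax 1 (Cmod vk) ^ d) <= Acst * (3 * tau * B1 ^ d)).
      { apply Rmult_le_compat_l. lra. apply Rmult_le_compat_l. lra. auto. }
      lra. }
    assert (HLip : Cmod (hh vk - hh hk) <= eps / 2).
    { assert (Hhk : Cmod hk <= B1) by (unfold B1; lra).
      pose proof (hlip vk hk B1 Hvk Hhk ltac:(lra)) as Hl. fold L in Hl.
      eapply Rle_trans. apply Hl. eapply Rle_trans. apply Rmult_le_compat_l. auto. apply HIH.
      eapply Rle_trans. apply Rmult_le_compat_l. auto. apply He1b.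
      unfold Rdiv. rewrite Rinv_mult. 
      assert (L * / (L + 1) <= 1).
      { apply Rmult_le_reg_r with (L + 1). lra. rewrite Rmult_assoc, Rinv_l by lra. lra. }
      assert (0 < / (L + 1)) by (apply Rinv_0_lt_compat; lra).
      replace (L * (eps * (/ 2 * / (L + 1)))) with ((L * / (L + 1)) * (eps * / 2)) by ring.
      assert (0 < eps * / 2) by lra. nra. }
    simpl Nat.iter. fold hk.
    assert (Cmod (vv z th w (S k) - hh hk) <= Cmod (vv z th w (S k) - hh vk) + Cmod (hh vk - hh hk)).
    { replace (vv z th w (S k) - hh hk)%C with ((vv z th w (S k) - hh vk) + (hh vk - hh hk))%C by ring. apply Cmod_triangle. }
    lra.
Qed.


Lemma geo_tel (a : nat -> R) K (dd : R) : 2 <= dd -> 0 <= K ->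
  (forall n, Rabs (a (S n) - a n) <= K / dd ^ (S n)) -> forall n, Rabs (a n - a 0%nat) <= K.
Proof.
  intros Hdd2 HK H.
  assert (G : forall n, Rabs (a n - a 0%nat) <= K * (1 - / dd ^ n)).
  { induction n.
    - simpl. rewrite Rinv_1. replace (a 0%nat - a 0%nat) with 0 by ring. rewrite Rabs_R0. lra.
    - assert (Hp : 0 < dd ^ n) by (apply pow_lt; lra).
      eapply Rle_trans. { replace (a (S n) - a 0%nat) with ((a (S n) - a n) + (a n - a 0%nat)) by ring. apply Rabs_triang. }
      specialize (H n).
      assert (E : K / dd ^ S n + K * (1 - / dd ^ n) <= K * (1 - / dd ^ S n)).
      { simpl. unfold Rdiv. rewrite Rinv_mult.
        assert (0 < / dd ^ n) by (apply Rinv_0_lt_compat; lra).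
        assert (/ dd <= / 2) by (apply Rinv_le_contravar; lra).
        assert (0 < / dd) by (apply Rinv_0_lt_compat; lra).
        assert (K * (/ dd * / dd ^ n) <= K * (/ 2 * / dd ^ n)) by (apply Rmult_le_compat_l; auto; nra).
        nra. }
      lra. }
  intros n. eapply Rle_trans. apply G.
  assert (0 < / dd ^ n) by (apply Rinv_0_lt_compat; apply pow_lt; lra). nra.
Qed.

Lemma large_tel (x : nat -> R) A M tau (dn : nat) : (2 <= dn)%nat -> 1 <= A -> 8 * A <= M -> 0 <= tau -> M <= x 0%nat ->
  (forall n, 8 * A <= x n -> 2 * x n <= x (S n) /\ Rabs (ln (x (S n)) - INR dn * ln (x n)) <= 2 * A / x n + tau) ->
  forall n, M <= x n /\ Rabs (/ INR dn ^ n * ln (x n) - ln (x 0%nat)) <= 2 * A / M + tau.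
Proof.
  intros Hdd2 HA HM Ht Hx0 H.
  assert (Hdd2R : 2 <= INR dn) by (replace 2 with (INR 2) by (simpl; lra); apply le_INR; lia).
  assert (Hge : forall n, M <= x n).
  { induction n. auto. destruct (H n ltac:(lra)). lra. }
  intros n. split. auto.
  replace (ln (x 0%nat)) with (/ INR dn ^ 0 * ln (x 0%nat)) by (simpl; field).
  apply (geo_tel (fun n => / INR dn ^ n * ln (x n)) _ (INR dn)); auto.
  { assert (0 <= 2 * A / M) by (unfold Rdiv; apply Rmult_le_pos; [lra| left; apply Rinv_0_lt_compat; lra]). lra. }
  intros k. specialize (Hge k). destruct (H k ltac:(lra)) as [_ Hk].
  assert (Hp : 0 < INR dn ^ k) by (apply pow_lt; lra).
  replace (/ INR dn ^ S k * ln (x (S k)) - / INR dn ^ k * ln (x k)) with ((ln (x (S k)) - INR dn * ln (x k)) / INR dn ^ S k)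
    by (simpl; field; lra).
  unfold Rdiv. rewrite Rabs_mult. rewrite (Rabs_right (/ INR dn ^ S k)) by (left; apply Rinv_0_lt_compat; apply pow_lt; lra).
  apply Rmult_le_compat_r. left; apply Rinv_0_lt_compat; apply pow_lt; lra.
  eapply Rle_trans. apply Hk.
  assert (2 * A / x k <= 2 * A / M).
  { unfold Rdiv. apply Rmult_le_compat_l. lra. apply Rinv_le_contravar; lra. }
  unfold Rdiv in *. lra.
Qed.

Lemma Cmod_rev a b : Rabs (Cmod a - Cmod b) <= Cmod (a - b).
Proof.
  apply abs_le. split.
  - assert (Cmod b <= Cmod a + Cmod (b - a)).
    { replace b with (a + (b - a))%C at 1 by ring. apply Cmod_triangle. }
    replace (b - a)%C with (- (a - b))%C in H by ring. rewrite Cmod_opp in H. lra.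
  - assert (Cmod a <= Cmod b + Cmod (a - b)).
    { replace a with (b + (a - b))%C at 1 by ring. apply Cmod_triangle. }
    lra.
Qed.

Lemma vstep z th w n eg : 2 * Pcst + 2 <= Cmod z -> 0 <= eg ->
  (forall j m, (j <= N)%nat -> (m <= d)%nat -> qc j m <> Cx0 -> ~ ex j m ->
     Rpower (Cmod (Zs z w n)) (INR j + alpha * INR m - alpha * INR delta) <= eg) ->
  Rabs (/ rho z w n * Cmod (vv z th w (S n)) - Cmod (vv z th w n) ^ d) <=
  Acst * Rmax 1 (Cmod (vv z th w n)) ^ (d - 1) + (Acst * eg) * Rmax 1 (Cmod (vv z th w n)) ^ d.
Proof.
  intros Hz Heg Hgap. pose proof (NS z th w n eg Hz Heg Hgap) as H.
  pose proof (rho_pos z w n) as Hr.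
  replace (/ rho z w n * Cmod (vv z th w (S n))) with (Cmod (RtoC (/ rho z w n) * vv z th w (S n)))
    by (rewrite Cmod_mult, Cmod_R, Rabs_right; [reflexivity| left; apply Rinv_0_lt_compat; auto]).
  rewrite <- Cmod_pow. eapply Rle_trans. apply Cmod_rev.
  assert (Hrn : RtoC (rho z w n) <> RtoC 0) by (intros E; apply RtoC_inj in E; lra).
  assert (E : (RtoC (/ rho z w n) * vv z th w (S n) - vv z th w n ^ d)%C
    = (RtoC (/ rho z w n) * (vv z th w (S n) - RtoC (rho z w n) * vv z th w n ^ d))%C).
  { rewrite RtoC_inv by lra. field. auto. }
  rewrite E.
  rewrite Cmod_mult, Cmod_R, Rabs_right by (left; apply Rinv_0_lt_compat; auto).
  apply Rmult_le_reg_l with (rho z w n). auto. rewrite <- Rmult_assoc, Rinv_r by lra. rewrite Rmult_1_l.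
  eapply Rle_trans. apply H. right. ring.
Qed.

Lemma hstep x : Rabs (1 * Cmod (hh x) - Cmod x ^ d) <= Acst * Rmax 1 (Cmod x) ^ (d - 1) + 0 * Rmax 1 (Cmod x) ^ d.
Proof.
  rewrite Rmult_1_l, Rmult_0_l, Rplus_0_r. rewrite <- Cmod_pow. eapply Rle_trans. apply Cmod_rev. apply hnorm.
Qed.


Definition CG : R := INR d * ln (8 * Acst) + 2.

Lemma CG_nonneg : 0 <= CG.
Proof. unfold CG. pose proof A_ge1. assert (0 <= ln (8 * Acst)) by (apply ln_ge1_nonneg; lra).
  pose proof (pos_INR d). nra. Qed.

Lemma Ga_eq z th w : 2 * Pcst + 2 <= Cmod z ->
  G_alpha delta N d pc qc alpha z w = lim_seq (fun n => / INR d ^ n * logplus (Cmod (vv z th w n))).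
Proof.
  intros Hz. unfold G_alpha. f_equal. apply functional_extensionality. intros n. cbv zeta.
  rewrite vv_mod by auto. rewrite !Cnorm_Cmod. reflexivity.
Qed.

Lemma Ga_conv z th w eg : 2 * Pcst + 2 <= Cmod z -> 0 <= eg -> Acst * eg <= 1/4 ->
  (forall n j m, (j <= N)%nat -> (m <= d)%nat -> qc j m <> Cx0 -> ~ ex j m ->
     Rpower (Cmod (Zs z w n)) (INR j + alpha * INR m - alpha * INR delta) <= eg) ->
  (forall n, Rabs (ln (rho z w n)) <= 1/2) ->
  Un_cv (fun n => / INR d ^ n * logplus (Cmod (vv z th w n))) (G_alpha delta N d pc qc alpha z w) /\
  forall n, Rabs (G_alpha delta N d pc qc alpha z w - / INR d ^ n * logplus (Cmod (vv z th w n))) <= CG / INR d ^ n.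
Proof.
  intros Hz Heg HAe Hgap Hrho. pose proof A_ge1.
  destruct (seq_conv (fun n => logplus (Cmod (vv z th w n))) d CG Hd CG_nonneg) as [L [HL1 HL2]].
  - intros n. unfold CG.
    apply (GL d Acst (Cmod (vv z th w n)) (Cmod (vv z th w (S n))) (/ rho z w n) (Acst * eg)); auto.
    apply Cmod_ge_0. apply Cmod_ge_0. apply Rinv_0_lt_compat, rho_pos.
    rewrite ln_Rinv by apply rho_pos. rewrite Rabs_Ropp. auto.
    split; [apply Rmult_le_pos; lra| lra].
    apply vstep; auto.
  - rewrite (Ga_eq z th w Hz). rewrite (lim_seq_eq _ L HL1). split; auto.
Qed.

Lemma Gh_conv c :
  Un_cv (fun n => / INR d ^ n * logplus (Cmod (Nat.iter n hh c))) (G_h delta N d qc alpha c) /\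
  forall n, Rabs (G_h delta N d qc alpha c - / INR d ^ n * logplus (Cmod (Nat.iter n hh c))) <= CG / INR d ^ n.
Proof.
  pose proof A_ge1.
  destruct (seq_conv (fun n => logplus (Cmod (Nat.iter n hh c))) d CG Hd CG_nonneg) as [L [HL1 HL2]].
  - intros n. unfold CG.
    apply (GL d Acst (Cmod (Nat.iter n hh c)) (Cmod (Nat.iter (S n) hh c)) 1 0); auto.
    apply Cmod_ge_0. apply Cmod_ge_0. lra. rewrite ln_1, Rabs_R0. lra. lra.
    simpl Nat.iter. apply hstep.
  - assert (E : G_h delta N d qc alpha c = lim_seq (fun n => / INR d ^ n * logplus (Cmod (Nat.iter n hh c)))).
    { unfold G_h. f_equal. apply functional_extensionality. intros n. rewrite Cnorm_Cmod. reflexivity. }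
    rewrite E, (lim_seq_eq _ L HL1). split; auto.
Qed.

Lemma Ga_large z th w eg M tau : 2 * Pcst + 2 <= Cmod z -> 0 <= eg -> Acst * eg <= 1/4 ->
  (forall n j m, (j <= N)%nat -> (m <= d)%nat -> qc j m <> Cx0 -> ~ ex j m ->
     Rpower (Cmod (Zs z w n)) (INR j + alpha * INR m - alpha * INR delta) <= eg) ->
  (forall n, Rabs (ln (rho z w n)) <= 1/2) ->
  (forall n, 2 * (Acst * eg) + Rabs (ln (rho z w n)) <= tau) ->
  8 * Acst <= M -> M <= Cmod (vv z th w 0) ->
  Rabs (G_alpha delta N d pc qc alpha z w - ln (Cmod (vv z th w 0))) <= 2 * Acst / M + tau.
Proof.
  intros Hz Heg HAe Hgap Hrho Htau HM HM0. pose proof A_ge1.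
  destruct (Ga_conv z th w eg Hz Heg HAe Hgap Hrho) as [Hcv _].
  assert (Ht0 : 0 <= tau) by (specialize (Htau 0%nat); pose proof (Rabs_pos (ln (rho z w 0))); nra).
  pose proof (large_tel (fun n => Cmod (vv z th w n)) Acst M tau d Hd H HM Ht0 HM0) as LT.
  assert (LT' : forall n, M <= Cmod (vv z th w n) /\
     Rabs (/ INR d ^ n * ln (Cmod (vv z th w n)) - ln (Cmod (vv z th w 0))) <= 2 * Acst / M + tau).
  { apply LT. intros n Hn.
    destruct (GL_large d Acst (Cmod (vv z th w n)) (Cmod (vv z th w (S n))) (/ rho z w n) (Acst * eg)) as [G1 G2]; auto.
    apply Cmod_ge_0. apply Rinv_0_lt_compat, rho_pos.
    rewrite ln_Rinv by apply rho_pos. rewrite Rabs_Ropp. auto.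
    split; [apply Rmult_le_pos; lra| lra].
    { pose proof (vstep z th w n eg Hz Heg (Hgap n)) as V.
      assert (HX : Rmax 1 (Cmod (vv z th w n)) = Cmod (vv z th w n)) by (unfold Rmax; destruct (Rle_dec 1 (Cmod (vv z th w n))); lra).
      rewrite HX in V. exact V. }
    split. auto. rewrite ln_Rinv in G2 by apply rho_pos. rewrite Rabs_Ropp in G2.
    specialize (Htau n). lra. }
  apply (cv_bound _ _ _ _ 0 Hcv). intros m _.
  destruct (LT' m) as [Hm1 Hm2]. rewrite logplus_ge1 by lra. auto.
Qed.

Lemma Gh_large c M : 8 * Acst <= M -> M <= Cmod c ->
  Rabs (G_h delta N d qc alpha c - ln (Cmod c)) <= 2 * Acst / M.
Proof.
  intros HM HM0. pose proof A_ge1.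
  destruct (Gh_conv c) as [Hcv _].
  pose proof (large_tel (fun n => Cmod (Nat.iter n hh c)) Acst M 0 d Hd H HM ltac:(lra) HM0) as LT.
  assert (LT' : forall n, M <= Cmod (Nat.iter n hh c) /\
     Rabs (/ INR d ^ n * ln (Cmod (Nat.iter n hh c)) - ln (Cmod (Nat.iter 0 hh c))) <= 2 * Acst / M + 0).
  { apply LT. intros n Hn.
    destruct (GL_large d Acst (Cmod (Nat.iter n hh c)) (Cmod (Nat.iter (S n) hh c)) 1 0) as [G1 G2]; auto.
    apply Cmod_ge_0. lra. rewrite ln_1, Rabs_R0. lra. lra.
    { pose proof (hstep (Nat.iter n hh c)) as V.
      assert (HX : Rmax 1 (Cmod (Nat.iter n hh c)) = Cmod (Nat.iter n hh c)) by (unfold Rmax; destruct (Rle_dec 1 (Cmod (Nat.iter n hh c))); lra).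
      rewrite HX in V. simpl Nat.iter at 1. exact V. }
    split. auto. rewrite ln_1, Rabs_R0 in G2. lra. }
  rewrite <- (Rplus_0_r (2 * Acst / M)).
  apply (cv_bound _ _ _ _ 0 Hcv). intros m _.
  destruct (LT' m) as [Hm1 Hm2]. rewrite logplus_ge1 by lra. auto.
Qed.


Lemma choose_k K t : 0 <= K -> 0 < t -> exists k, K / INR d ^ k <= t.
Proof.
  intros HK Ht.
  assert (HdR : 2 <= INR d) by (replace 2 with (INR 2) by (simpl; lra); apply le_INR; lia).
  destruct (archimed (K / t)) as [Ha _].
  exists (Z.to_nat (up (K / t))).
  set (k := Z.to_nat (up (K / t))).
  assert (K / t <= INR k).
  { unfold k. destruct (Rle_dec 0 (IZR (up (K / t)))) as [Hu|Hu].
    - rewrite INR_IZR_INZ. rewrite Z2Nat.id. lra. apply le_IZR. lra.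
    - assert (0 <= K / t) by (unfold Rdiv; apply Rmult_le_pos; [lra| left; apply Rinv_0_lt_compat; lra]). lra. }
  pose proof (pow_ge_S (INR d) k HdR).
  assert (Hp : 0 < INR d ^ k) by (apply pow_lt; lra).
  apply Rmult_le_reg_r with (INR d ^ k); auto. unfold Rdiv. rewrite Rmult_assoc, Rinv_l by lra. rewrite Rmult_1_r.
  assert (K <= t * INR k).
  { apply Rmult_le_reg_r with (/ t). apply Rinv_0_lt_compat; lra.
    replace (t * INR k * / t) with (INR k) by (field; lra). exact H. }
  nra.
Qed.

Lemma main_sec : forall eps, 0 < eps ->
  exists Rad, 0 < Rad /\
    forall z w : Cx, Rad < Cnorm z ->
      forall theta, is_arg z theta ->
        Rabs (G_alpha delta N d pc qc alpha z w
              - G_h delta N d qc alpha (Cmul (zpow_branch alpha z theta) w)) < eps.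
Proof.
  intros eps Heps. pose proof A_ge1 as HA. pose proof P_ge1 as HP.
  set (M := Rmax (8 * Acst) (32 * Acst / eps)).
  assert (HM1 : 8 * Acst <= M) by apply Rmax_l.
  assert (HM2 : 32 * Acst / eps <= M) by apply Rmax_r.
  assert (HAM : 2 * Acst / M <= eps / 16).
  { assert (0 < M) by lra. apply Rmult_le_reg_r with (M * 16 / eps). apply Rdiv_lt_0_compat; lra.
    replace (2 * Acst / M * (M * 16 / eps)) with (32 * Acst / eps) by (field; split; lra).
    replace (eps / 16 * (M * 16 / eps)) with M by (field; lra). lra. }
  set (eg := Rmin (1 / (4 * Acst)) (eps / (64 * Acst))).
  assert (Heg : 0 < eg) by (apply Rmin_glb_lt; apply Rdiv_lt_0_compat; lra).
  assert (HAe1 : Acst * eg <= 1/4).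
  { assert (eg <= 1 / (4 * Acst)) by apply Rmin_l.
    assert (Acst * eg <= Acst * (1 / (4 * Acst))) by (apply Rmult_le_compat_l; lra).
    replace (Acst * (1 / (4 * Acst))) with (1/4) in H0 by (field; lra). lra. }
  assert (HAe2 : Acst * eg <= eps / 64).
  { assert (eg <= eps / (64 * Acst)) by apply Rmin_r.
    assert (Acst * eg <= Acst * (eps / (64 * Acst))) by (apply Rmult_le_compat_l; lra).
    replace (Acst * (eps / (64 * Acst))) with (eps / 64) in H0 by (field; lra). lra. }
  destruct (gap_uniform eg Heg) as [Rg [HRg1 HRg]].
  set (tr := Rmin (1/2) (eps / 32)).
  assert (Htr : 0 < tr) by (apply Rmin_glb_lt; lra).
  assert (Htr1 : tr <= 1/2) by apply Rmin_l. assert (Htr2 : tr <= eps / 32) by apply Rmin_r.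
  destruct (rho_uniform tr Htr) as [Rr [HRr1 HRr]].
  destruct (choose_k CG (eps / 4) CG_nonneg ltac:(lra)) as [k Hk].
  destruct (OC M k (eps / 4) ltac:(lra)) as [Roc [HRoc1 HRoc]].
  exists (Rmax (Rmax Rg Rr) Roc). split.
  { pose proof (Rmax_r (Rmax Rg Rr) Roc). lra. }
  intros z w Hz th Harg. rewrite Cnorm_Cmod in Hz.
  pose proof (Rmax_l (Rmax Rg Rr) Roc). pose proof (Rmax_r (Rmax Rg Rr) Roc).
  pose proof (Rmax_l Rg Rr). pose proof (Rmax_r Rg Rr).
  assert (Hzg : Rg <= Cmod z) by lra.
  assert (Hzr : Rr <= Cmod z) by lra.
  assert (Hzo : Roc <= Cmod z) by lra.
  assert (Hzp : 2 * Pcst + 2 <= Cmod z) by lra.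
  assert (Hgap : forall n j m, (j <= N)%nat -> (m <= d)%nat -> qc j m <> Cx0 -> ~ ex j m ->
     Rpower (Cmod (Zs z w n)) (INR j + alpha * INR m - alpha * INR delta) <= eg).
  { intros n j m Hj Hm Hq Hne. apply HRg; auto. eapply Rle_trans; [apply Hzg| apply Zs_large; auto]. }
  assert (Hrho : forall n, Rabs (ln (rho z w n)) <= tr) by (intros n; apply (HRr z w n Hzr)).
  assert (Hrho2 : forall n, Rabs (ln (rho z w n)) <= 1/2) by (intros n; specialize (Hrho n); lra).
  change (Cmul (zpow_branch alpha z th) w) with (vv z th w 0).
  destruct (Ga_conv z th w eg Hzp ltac:(lra) HAe1 Hgap Hrho2) as [_ Ga].
  destruct (Gh_conv (vv z th w 0)) as [_ Gh].
  destruct (Rle_dec M (Cmod (vv z th w 0))) as [Hl|Hs].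
  - assert (L1 : Rabs (G_alpha delta N d pc qc alpha z w - ln (Cmod (vv z th w 0))) <= 2 * Acst / M + eps / 16).
    { apply (Ga_large z th w eg M (eps/16)); auto. lra.
      intros n. specialize (Hrho n). lra. }
    pose proof (Gh_large (vv z th w 0) M HM1 Hl) as L2.
    replace (G_alpha delta N d pc qc alpha z w - G_h delta N d qc alpha (vv z th w 0))
      with ((G_alpha delta N d pc qc alpha z w - ln (Cmod (vv z th w 0))) - (G_h delta N d qc alpha (vv z th w 0) - ln (Cmod (vv z th w 0)))) by ring.
    eapply Rle_lt_trans. apply Rabs_triang. rewrite Rabs_Ropp. lra.
  - assert (HOC := HRoc z th w Hzo Harg ltac:(lra)).
    specialize (Ga k). specialize (Gh k).
    assert (HdR : 2 <= INR d) by (replace 2 with (INR 2) by (simpl; lra); apply le_INR; lia).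
    assert (Hp : 1 <= INR d ^ k) by (apply pow_R1_Rle; lra).
    assert (Hip : 0 < / INR d ^ k <= 1).
    { split. apply Rinv_0_lt_compat; lra. rewrite <- Rinv_1. apply Rinv_le_contravar; lra. }
    set (x := Cmod (vv z th w k)). set (y := Cmod (Nat.iter k hh (vv z th w 0))).
    assert (Hxy : Rabs (/ INR d ^ k * logplus x - / INR d ^ k * logplus y) <= eps / 4).
    { rewrite <- Rmult_minus_distr_l. rewrite Rabs_mult, (Rabs_right (/ INR d ^ k)) by lra.
      assert (Rabs (logplus x - logplus y) <= eps / 4).
      { eapply Rle_trans. apply logplus_lip; apply Cmod_ge_0. eapply Rle_trans. apply Cmod_rev. auto. }
      pose proof (Rabs_pos (logplus x - logplus y)). nra. }
    replace (G_alpha delta N d pc qc alpha z w - G_h delta N d qc alpha (vv z th w 0))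
      with ((G_alpha delta N d pc qc alpha z w - / INR d ^ k * logplus x) + (/ INR d ^ k * logplus x - / INR d ^ k * logplus y)
            - (G_h delta N d qc alpha (vv z th w 0) - / INR d ^ k * logplus y)) by ring.
    unfold Rminus at 1. eapply Rle_lt_trans. apply Rabs_triang. rewrite Rabs_Ropp.
    eapply Rle_lt_trans. apply Rplus_le_compat_r. apply Rabs_triang. 
    fold x y in Ga, Gh. lra.
Qed.

End Main.

Open Scope R_scope.

Theorem proposition4p14
  (delta d gamma N : nat) (pc : nat -> Cx) (qc : nat -> nat -> Cx) (alpha : R)
  (* p monic of degree delta >= 2 *)
  (Hdelta : (2 <= delta)%nat)
  (Hp_monic : pc delta = Cx1)
  (* q(z,w) = sum_{n<=N, m<=d} qc n m z^n w^m, deg_w q = d >= 2 *)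
  (Hd : (2 <= d)%nat)
  (Hq_supp : forall n m, (N < n)%nat \/ (d < m)%nat -> qc n m = Cx0)
  (* leading coefficient b(z) = sum_n qc n d z^n is monic of degree gamma *)
  (Hb_monic : qc gamma d = Cx1)
  (Hb_deg : forall n, (gamma < n)%nat -> qc n d = Cx0)
  (* delta > d *)
  (Hdd : (d < delta)%nat)
  (* alpha = max { n/(delta-m) : qc n m <> 0 } *)
  (Halpha_ub : forall n m, qc n m <> Cx0 -> INR n / (INR delta - INR m) <= alpha)
  (Halpha_att : exists n m, qc n m <> Cx0 /\ INR n / (INR delta - INR m) = alpha)
  (* alpha = gamma / (delta - d) *)
  (Halpha_eq : alpha = INR gamma / (INR delta - INR d))
  (* f is not a polynomial product: q depends on z *)
  (Hnotprod : exists n m, (1 <= n)%nat /\ qc n m <> Cx0) :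
  forall eps, 0 < eps ->
  exists Rad, 0 < Rad /\
    forall z w : Cx, Rad < Cnorm z ->
      forall theta, is_arg z theta ->
        Rabs (G_alpha delta N d pc qc alpha z w
              - G_h delta N d qc alpha (Cmul (zpow_branch alpha z theta) w)) < eps.
Proof.
  intros eps Heps. apply (main_sec delta d gamma N pc qc alpha); assumption.
Qed.
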